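(* Suppose $S$ and $T$ are identically zero on $\Omega$. Then for any $(x_0,y_0,z_0,\lambda_0)\in\Omega$ there exist an open set $W\subset\mathbb{R}^3$, an open interval $I\subset\mathbb{R}$ with $(x_0,y_0,z_0,\lambda_0)\in W\times I\subset\Omega$, and seven smooth functions $\hat a^0,\hat a^1,\hat a^2,\hat b^0,\hat b^1,\hat c^0,\hat c^1:W\to\mathbb{R}$ such that $\hat c^0+\hat c^1\lambda$ does not vanish on $W\times I$, $\hat c^1\hat b^0-\hat b^1\hat c^0$ does not vanish on $W$, and for $(x,y,z,\lambda)\in W\times I$ and $\dot x,\dot z\in\mathbb{R}$, the equation $\dot z=h(x,y,z,\lambda)+g(x,y,z,\lambda)\dot x$ is equivalent to $$\lambda\big(\hat b^1\dot x+\hat a^2\lambda-\hat c^1\dot z\big)+\big(\hat b^0\dot x+\hat a^1\lambda-\hat c^0\dot z\big)+\hat a^0=0,$$ where all of $\hat a^0,\dots,\hat c^1$ are evaluated at $(x,y,z)$.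
   Context: $\Omega\subset\mathbb{R}^4$ is open connected and $g,h:\Omega\to\mathbb{R}$ are real analytic functions of $(x,y,z,\lambda)$ such that $g_4=\partial g/\partial\lambda$ does not vanish on $\Omega$ and $G(x,y,z,\lambda)=(x,y,z,g(x,y,z,\lambda))$ is a diffeomorphism from $\Omega$ onto $G(\Omega)$. Numeric subscripts denote partial derivatives with respect to the corresponding argument. $S=2g_4g_{4,4,4}-3g_{4,4}^2$ and $T=2g_4h_{4,4,4}-3g_{4,4}h_{4,4}$. *)

(* Defs.v *)
From Stdlib Require Import Reals Lra.
From Coquelicot Require Import Coquelicot.
Open Scope R_scope.

Definition set3 := R -> R -> R -> Prop.
Definition set4 := R -> R -> R -> R -> Prop.
Definition fun3 := R -> R -> R -> R.
Definition fun4 := R -> R -> R -> R -> R.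

(* Openness w.r.t. the max-norm (same topology as the Euclidean one). *)
Definition open3 (W : set3) : Prop :=
  forall x y z, W x y z -> exists e, 0 < e /\
    forall x' y' z', Rabs (x' - x) < e -> Rabs (y' - y) < e -> Rabs (z' - z) < e ->
      W x' y' z'.

Definition open4 (O : set4) : Prop :=
  forall x y z l, O x y z l -> exists e, 0 < e /\
    forall x' y' z' l', Rabs (x' - x) < e -> Rabs (y' - y) < e ->
      Rabs (z' - z) < e -> Rabs (l' - l) < e -> O x' y' z' l'.

Definition connected4 (O : set4) : Prop :=
  forall U V : set4, open4 U -> open4 V ->
    (forall x y z l, O x y z l -> U x y z l \/ V x y z l) ->
    (forall x y z l, O x y z l -> U x y z l -> V x y z l -> False) ->
    (exists x y z l, O x y z l /\ U x y z l) ->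
    (exists x y z l, O x y z l /\ V x y z l) -> False.

Definition cube_sum (c : nat -> nat -> nat -> nat -> R) (a b d e : R) (N : nat) : R :=
  sum_f_R0 (fun i => sum_f_R0 (fun j => sum_f_R0 (fun k => sum_f_R0 (fun m =>
    c i j k m * a ^ i * b ^ j * d ^ k * e ^ m) N) N) N) N.

Definition analytic4 (O : set4) (f : fun4) : Prop :=
  forall x0 y0 z0 l0, O x0 y0 z0 l0 ->
    exists r, 0 < r /\ exists c : nat -> nat -> nat -> nat -> R,
      forall x y z l, Rabs (x - x0) < r -> Rabs (y - y0) < r ->
        Rabs (z - z0) < r -> Rabs (l - l0) < r ->
        O x y z l /\
        (exists B, forall N, cube_sum (fun i j k m => Rabs (c i j k m))
            (Rabs (x - x0)) (Rabs (y - y0)) (Rabs (z - z0)) (Rabs (l - l0)) N <= B) /\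
        Un_cv (cube_sum c (x - x0) (y - y0) (z - z0) (l - l0)) (f x y z l).

(* Partial derivatives (index 0,1,2[,3]; larger indices mean the last variable). *)
Definition partial3 (i : nat) (f : fun3) : fun3 :=
  fun x y z => match i with
  | O => Derive (fun t => f t y z) x
  | 1%nat => Derive (fun t => f x t z) y
  | _ => Derive (fun t => f x y t) z
  end.
Definition ex_partial3 (i : nat) (f : fun3) (x y z : R) : Prop :=
  match i with
  | O => ex_derive (fun t => f t y z) x
  | 1%nat => ex_derive (fun t => f x t z) y
  | _ => ex_derive (fun t => f x y t) z
  end.
Definition partial4 (i : nat) (f : fun4) : fun4 :=
  fun x y z l => match i with
  | O => Derive (fun t => f t y z l) x
  | 1%nat => Derive (fun t => f x t z l) y
  | 2%nat => Derive (fun t => f x y t l) z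
  | _ => Derive (fun t => f x y z t) l
  end.
Definition ex_partial4 (i : nat) (f : fun4) (x y z l : R) : Prop :=
  match i with
  | O => ex_derive (fun t => f t y z l) x
  | 1%nat => ex_derive (fun t => f x t z l) y
  | 2%nat => ex_derive (fun t => f x y t l) z
  | _ => ex_derive (fun t => f x y z t) l
  end.

Fixpoint iter_partial3 (ds : list nat) (f : fun3) : fun3 :=
  match ds with nil => f | cons i ds' => partial3 i (iter_partial3 ds' f) end.
Fixpoint iter_partial4 (ds : list nat) (f : fun4) : fun4 :=
  match ds with nil => f | cons i ds' => partial4 i (iter_partial4 ds' f) end.

Definition continuous_at3 (f : fun3) (x y z : R) : Prop :=
  forall eps, 0 < eps -> exists d, 0 < d /\ forall x' y' z',
    Rabs (x' - x) < d -> Rabs (y' - y) < d -> Rabs (z' - z) < d ->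
    Rabs (f x' y' z' - f x y z) < eps.
Definition continuous_at4 (f : fun4) (x y z l : R) : Prop :=
  forall eps, 0 < eps -> exists d, 0 < d /\ forall x' y' z' l',
    Rabs (x' - x) < d -> Rabs (y' - y) < d -> Rabs (z' - z) < d ->
    Rabs (l' - l) < d -> Rabs (f x' y' z' l' - f x y z l) < eps.

Definition smooth3 (W : set3) (f : fun3) : Prop :=
  forall ds x y z, W x y z ->
    continuous_at3 (iter_partial3 ds f) x y z /\
    forall i, ex_partial3 i (iter_partial3 ds f) x y z.
Definition smooth4 (O : set4) (f : fun4) : Prop :=
  forall ds x y z l, O x y z l ->
    continuous_at4 (iter_partial4 ds f) x y z l /\
    forall i, ex_partial4 i (iter_partial4 ds f) x y z l.

Definition image4 (O : set4) (G1 G2 G3 G4 : fun4) : set4 :=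
  fun u v w s => exists x y z l, O x y z l /\
    G1 x y z l = u /\ G2 x y z l = v /\ G3 x y z l = w /\ G4 x y z l = s.

Definition diffeo4 (O : set4) (G1 G2 G3 G4 : fun4) : Prop :=
  let GO := image4 O G1 G2 G3 G4 in
  open4 GO /\
  smooth4 O G1 /\ smooth4 O G2 /\ smooth4 O G3 /\ smooth4 O G4 /\
  exists H1 H2 H3 H4 : fun4,
    smooth4 GO H1 /\ smooth4 GO H2 /\ smooth4 GO H3 /\ smooth4 GO H4 /\
    (forall x y z l, O x y z l ->
       let u := G1 x y z l in let v := G2 x y z l in
       let w := G3 x y z l in let s := G4 x y z l in
       H1 u v w s = x /\ H2 u v w s = y /\ H3 u v w s = z /\ H4 u v w s = l) /\
    (forall u v w s, GO u v w s ->
       let x := H1 u v w s in let y := H2 u v w s in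
       let z := H3 u v w s in let l := H4 u v w s in
       O x y z l /\
       G1 x y z l = u /\ G2 x y z l = v /\ G3 x y z l = w /\ G4 x y z l = s).

Definition dl (f : fun4) : fun4 := partial4 3 f.

Definition S_of (g : fun4) : fun4 := fun x y z l =>
  2 * dl g x y z l * dl (dl (dl g)) x y z l - 3 * (dl (dl g) x y z l) ^ 2.
Definition T_of (g h : fun4) : fun4 := fun x y z l =>
  2 * dl g x y z l * dl (dl (dl h)) x y z l - 3 * dl (dl g) x y z l * dl (dl h) x y z l.

(* Main.v *)
Require Import Defs.
From Stdlib Require Import Reals.
From Coquelicot Require Import Coquelicot.
Open Scope R_scope.
From Stdlib Require Import Lra List Lia.
Lemma loc_of (x e : R) (P : R -> Prop) : 0 < e -> (forall t, Rabs (t - x) < e -> P t) -> locally x P.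
Proof. intros He H. exists (mkposreal e He). intros t Ht. apply H. exact Ht. Qed.

Definition cv (i : nat) : nat := match i with O => O | 1%nat => 1%nat | _ => 2%nat end.

Lemma iter_restrict (f : fun4) l0 ds0 ds : forall x y z,
  iter_partial3 ds (fun x y z => iter_partial4 ds0 f x y z l0) x y z =
  iter_partial4 (map cv ds ++ ds0) f x y z l0.
Proof.
  induction ds as [|i ds IH]; intros x y z; simpl; auto.
  destruct i as [|[|i]]; simpl; apply Derive_ext; intros t; apply IH.
Qed.

Lemma smooth_restrict (O : set4) (W : set3) (f : fun4) l0 ds0 :
  smooth4 O f -> (forall x y z, W x y z -> O x y z l0) ->
  smooth3 W (fun x y z => iter_partial4 ds0 f x y z l0).
Proof.
  intros Hs HW ds x y z Hxyz.
  destruct (Hs (map cv ds ++ ds0) x y z l0 (HW _ _ _ Hxyz)) as [Hc He].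
  split.
  - intros eps Heps. destruct (Hc eps Heps) as [d [Hd Hd']].
    exists d; split; auto. intros x' y' z' H1 H2 H3.
    rewrite !iter_restrict. apply Hd'; auto. rewrite Rminus_eq_0, Rabs_R0; auto.
  - intros i. destruct i as [|[|i]]; simpl.
    + eapply ex_derive_ext; [intros t; symmetry; apply iter_restrict|]. apply (He 0%nat).
    + eapply ex_derive_ext; [intros t; symmetry; apply iter_restrict|]. apply (He 1%nat).
    + eapply ex_derive_ext; [intros t; symmetry; apply iter_restrict|]. apply (He 2%nat).
Qed.

Lemma smooth4_mono (O O' : set4) f : (forall x y z l, O' x y z l -> O x y z l) -> smooth4 O f -> smooth4 O' f.
Proof. intros H Hs ds x y z l Hp. apply Hs. auto. Qed.

Lemma cont3_plus f g x y z : continuous_at3 f x y z -> continuous_at3 g x y z ->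
  continuous_at3 (fun x y z => f x y z + g x y z) x y z.
Proof.
  intros Hf Hg eps He.
  destruct (Hf (eps/2)) as [d1 [Hd1 H1]]; [lra|].
  destruct (Hg (eps/2)) as [d2 [Hd2 H2]]; [lra|].
  exists (Rmin d1 d2); split. apply Rmin_pos; auto.
  intros x' y' z' a b c.
  pose proof (Rmin_l d1 d2); pose proof (Rmin_r d1 d2).
  specialize (H1 x' y' z' ltac:(lra) ltac:(lra) ltac:(lra)).
  specialize (H2 x' y' z' ltac:(lra) ltac:(lra) ltac:(lra)).
  replace (f x' y' z' + g x' y' z' - (f x y z + g x y z)) with
     ((f x' y' z' - f x y z) + (g x' y' z' - g x y z)) by ring.
  eapply Rle_lt_trans. apply Rabs_triang. lra.
Qed.

Lemma cont3_mult f g x y z : continuous_at3 f x y z -> continuous_at3 g x y z ->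
  continuous_at3 (fun x y z => f x y z * g x y z) x y z.
Proof.
  intros Hf Hg eps He.
  set (A := Rabs (f x y z) + 1). set (B := Rabs (g x y z) + 1).
  assert (HA : 0 < A) by (unfold A; pose proof (Rabs_pos (f x y z)); lra).
  assert (HB : 0 < B) by (unfold B; pose proof (Rabs_pos (g x y z)); lra).
  destruct (Hf (Rmin 1 (eps / (2 * B)))) as [d1 [Hd1 H1]].
  { apply Rmin_pos; [lra|]. apply Rdiv_lt_0_compat; lra. }
  destruct (Hg (Rmin 1 (eps / (2 * A)))) as [d2 [Hd2 H2]].
  { apply Rmin_pos; [lra|]. apply Rdiv_lt_0_compat; lra. }
  exists (Rmin d1 d2); split. apply Rmin_pos; auto.
  intros x' y' z' a b c.
  pose proof (Rmin_l d1 d2); pose proof (Rmin_r d1 d2).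
  specialize (H1 x' y' z' ltac:(lra) ltac:(lra) ltac:(lra)).
  specialize (H2 x' y' z' ltac:(lra) ltac:(lra) ltac:(lra)).
  set (u := f x' y' z' - f x y z) in *. set (v := g x' y' z' - g x y z) in *.
  replace (f x' y' z' * g x' y' z' - f x y z * g x y z) with
     (u * g x' y' z' + f x y z * v) by (unfold u, v; ring).
  assert (Hu1 : Rabs u < 1) by (eapply Rlt_le_trans; [apply H1|apply Rmin_l]).
  assert (Hu2 : Rabs u < eps / (2 * B)) by (eapply Rlt_le_trans; [apply H1|apply Rmin_r]).
  assert (Hv1 : Rabs v < 1) by (eapply Rlt_le_trans; [apply H2|apply Rmin_l]).
  assert (Hv2 : Rabs v < eps / (2 * A)) by (eapply Rlt_le_trans; [apply H2|apply Rmin_r]).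
  assert (Hg' : Rabs (g x' y' z') <= B).
  { replace (g x' y' z') with (g x y z + v) by (unfold v; ring).
    eapply Rle_trans. apply Rabs_triang. unfold B; lra. }
  eapply Rle_lt_trans. apply Rabs_triang. rewrite !Rabs_mult.
  assert (Rabs u * Rabs (g x' y' z') <= eps / (2 * B) * B).
  { apply Rmult_le_compat; try apply Rabs_pos; lra. }
  assert (Rabs (f x y z) * Rabs v <= A * (eps / (2 * A))).
  { assert (Rabs (f x y z) <= A) by (unfold A; lra). apply Rmult_le_compat; try apply Rabs_pos; lra. }
  replace (eps / (2 * B) * B) with (eps / 2) in * by (field; lra).
  replace (A * (eps / (2 * A))) with (eps / 2) in * by (field; lra).
  assert (Rabs (f x y z) * Rabs v < A * (eps / (2 * A)) \/ True) by auto.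
  destruct (Req_dec (Rabs v) 0) as [Z|Z].
  - rewrite Z. assert (Rabs u * Rabs (g x' y' z') < eps/2 \/ Rabs u * Rabs (g x' y' z') <= eps / 2) by lra.
    destruct (Req_dec (Rabs u) 0) as [Z'|Z']. { rewrite Z'; rewrite ?Rmult_0_l, ?Rmult_0_r, ?Rplus_0_l; lra. }
    assert (Rabs u * Rabs (g x' y' z') < eps / (2 * B) * B).
    { pose proof (Rabs_pos u). pose proof (Rabs_pos (g x' y' z')).
      apply Rle_lt_trans with (Rabs u * B). apply Rmult_le_compat_l; lra.
      apply Rmult_lt_compat_r; lra. }
    replace (eps / (2 * B) * B) with (eps / 2) in * by (field; lra). lra.
  - assert (Rabs (f x y z) * Rabs v < A * (eps / (2 * A))).
    { pose proof (Rabs_pos v). pose proof (Rabs_pos (f x y z)).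
      apply Rle_lt_trans with (Rabs (f x y z) * (eps / (2 * A))).
      apply Rmult_le_compat_l; lra. apply Rmult_lt_compat_r. apply Rdiv_lt_0_compat; lra. unfold A; lra. }
    replace (A * (eps / (2 * A))) with (eps / 2) in * by (field; lra). lra.
Qed.

Lemma dmul f g x df dg : is_derive f x df -> is_derive g x dg ->
  is_derive (fun t => f t * g t) x (df * g x + f x * dg).
Proof. intros. apply (is_derive_mult f g x df dg); auto. intros; apply Rmult_comm. Qed.
Lemma dplus f g x df dg : is_derive f x df -> is_derive g x dg ->
  is_derive (fun t => f t + g t) x (df + dg).
Proof. intros. apply (is_derive_plus f g x df dg); auto. Qed.
Lemma dminus f g x df dg : is_derive f x df -> is_derive g x dg ->
  is_derive (fun t => f t - g t) x (df - dg).
Proof. intros. apply (is_derive_minus f g x df dg); auto. Qed.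
Lemma dconst (a x : R) : @is_derive R_AbsRing R_NormedModule (fun _ : R => a) x 0.
Proof. apply (is_derive_const a x). Qed.
Lemma did (x : R) : @is_derive R_AbsRing R_NormedModule (fun t : R => t) x 1.
Proof. apply (is_derive_id x). Qed.
Lemma deq (f : R -> R) (x l l' : R) : is_derive f x l -> l = l' -> is_derive f x l'.
Proof. intros; subst; auto. Qed.

Definition is_partial3 (i : nat) (f : fun3) (x y z v : R) : Prop :=
  match i with
  | O => is_derive (fun t => f t y z) x v
  | 1%nat => is_derive (fun t => f x t z) y v
  | _ => is_derive (fun t => f x y t) z v
  end.

Lemma ip_of_ex i f x y z : ex_partial3 i f x y z -> is_partial3 i f x y z (partial3 i f x y z).
Proof. destruct i as [|[|i]]; simpl; intros; apply Derive_correct; auto. Qed.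
Lemma ip_unique i f x y z v : is_partial3 i f x y z v -> partial3 i f x y z = v.
Proof. destruct i as [|[|i]]; simpl; intros; apply is_derive_unique; auto. Qed.
Lemma ip_ex i f x y z v : is_partial3 i f x y z v -> ex_partial3 i f x y z.
Proof. destruct i as [|[|i]]; simpl; intros; eexists; eauto. Qed.
Lemma ip_plus i f g x y z a b : is_partial3 i f x y z a -> is_partial3 i g x y z b ->
  is_partial3 i (fun x y z => f x y z + g x y z) x y z (a + b).
Proof. destruct i as [|[|i]]; simpl; intros; apply dplus; auto. Qed.
Lemma ip_mult i f g x y z a b : is_partial3 i f x y z a -> is_partial3 i g x y z b ->
  is_partial3 i (fun x y z => f x y z * g x y z) x y z (a * g x y z + f x y z * b).
Proof. destruct i as [|[|i]]; simpl; intros; cbv beta; apply (dmul (fun t => _) (fun t => _)); auto. Qed.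
Lemma ip_const i c x y z : is_partial3 i (fun _ _ _ => c) x y z 0.
Proof. destruct i as [|[|i]]; simpl; apply dconst. Qed.
Lemma ip_eq i f x y z a b : is_partial3 i f x y z a -> a = b -> is_partial3 i f x y z b.
Proof. intros; subst; auto. Qed.

Lemma ip_ext_loc (W : set3) i f g x y z v : open3 W -> W x y z ->
  (forall x y z, W x y z -> f x y z = g x y z) ->
  is_partial3 i g x y z v -> is_partial3 i f x y z v.
Proof.
  intros HW Hp Hfg Hg. destruct (HW x y z Hp) as [e [He He']].
  destruct i as [|[|i]]; simpl in *; eapply is_derive_ext_loc; try apply Hg;
  apply (loc_of _ e); auto; intros t Ht; symmetry; apply Hfg; apply He';
  rewrite ?Rminus_eq_0, ?Rabs_R0; auto.
Qed.

Lemma cont3_ext_loc (W : set3) f g x y z : open3 W -> W x y z ->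
  (forall x y z, W x y z -> f x y z = g x y z) ->
  continuous_at3 g x y z -> continuous_at3 f x y z.
Proof.
  intros HW Hp Hfg Hg eps Heps. destruct (HW x y z Hp) as [e [He He']].
  destruct (Hg eps Heps) as [d [Hd Hd']].
  exists (Rmin d e); split. apply Rmin_pos; auto.
  intros x' y' z' a b c. pose proof (Rmin_l d e); pose proof (Rmin_r d e).
  rewrite !Hfg; auto. apply Hd'; lra. apply He'; lra.
Qed.

Lemma iter3_app ds i f : iter_partial3 (ds ++ i :: nil) f = iter_partial3 ds (partial3 i f).
Proof. induction ds; simpl; auto. rewrite IHds; auto. Qed.

Lemma smooth_partial W f i : smooth3 W f -> smooth3 W (partial3 i f).
Proof. intros Hs ds x y z Hp. rewrite <- iter3_app. apply Hs; auto. Qed.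

Lemma smooth_const W c : smooth3 W (fun _ _ _ => c).
Proof.
  assert (K : forall ds, exists k, forall x y z, iter_partial3 ds (fun _ _ _ => c) x y z = k).
  { induction ds as [|i ds [k Hk]]. exists c; auto.
    exists 0. intros x y z. change (partial3 i (iter_partial3 ds (fun _ _ _ => c)) x y z = 0).
    apply ip_unique.
    apply (ip_ext_loc (fun _ _ _ => True) i _ (fun _ _ _ => k)); auto.
    - intros ? ? ? _. exists 1; split; auto; lra.
    - apply ip_const. }
  intros ds x y z Hp. destruct (K ds) as [k Hk]. split.
  - intros eps He. exists 1; split. lra. intros. rewrite !Hk, Rminus_eq_0, Rabs_R0; auto.
  - intros i. eapply ip_ex. apply (ip_ext_loc (fun _ _ _ => True) i _ (fun _ _ _ => k)); auto.
    + intros ? ? ? _. exists 1; split; auto; lra.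
    + apply (ip_const i k).
Qed.

Definition sp (L : list (fun3 * fun3)) : fun3 :=
  fun x y z => fold_right (fun p acc => fst p x y z * snd p x y z + acc) 0 L.
Definition dL (i : nat) (L : list (fun3 * fun3)) : list (fun3 * fun3) :=
  flat_map (fun p => (partial3 i (fst p), snd p) :: (fst p, partial3 i (snd p)) :: nil) L.
Definition allsm (W : set3) (L : list (fun3 * fun3)) : Prop :=
  List.Forall (fun p => smooth3 W (fst p) /\ smooth3 W (snd p)) L.

Lemma allsm_dL W L i : allsm W L -> allsm W (dL i L).
Proof.
  induction L as [|[f g] L IH]; simpl; intros H; auto.
  inversion H as [|? ? [Hf Hg] HL]; subst.
  constructor; [split; simpl; auto; apply smooth_partial; auto|].
  constructor; [split; simpl; auto; apply smooth_partial; auto|].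
  apply IH; auto.
Qed.

Lemma sp_partial W L x y z i : allsm W L -> W x y z ->
  is_partial3 i (sp L) x y z (sp (dL i L) x y z).
Proof.
  induction L as [|[f g] L IH]; intros H Hp.
  - apply ip_const.
  - inversion H as [|? ? [Hf Hg] HL]; subst. simpl in Hf, Hg.
    unfold sp; simpl. eapply ip_eq.
    + apply ip_plus. apply ip_mult; apply ip_of_ex; [apply (proj2 (Hf nil x y z Hp))|apply (proj2 (Hg nil x y z Hp))].
      apply IH; auto.
    + unfold sp. simpl. ring.
Qed.

Lemma sp_cont W L x y z : allsm W L -> W x y z -> continuous_at3 (sp L) x y z.
Proof.
  induction L as [|[f g] L IH]; intros H Hp.
  - intros eps He. exists 1. split. lra. intros. unfold sp; simpl.
    rewrite Rminus_eq_0, Rabs_R0; auto.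
  - inversion H as [|? ? [Hf Hg] HL]; subst. simpl in Hf, Hg.
    apply (cont3_plus (fun x y z => f x y z * g x y z) (sp L)).
    apply cont3_mult; [apply (Hf nil)|apply (Hg nil)]; auto.
    apply IH; auto.
Qed.

Lemma smooth_sp_eq W F L : open3 W -> allsm W L ->
  (forall x y z, W x y z -> F x y z = sp L x y z) -> smooth3 W F.
Proof.
  intros HW HL HF.
  assert (K : forall ds, exists L', allsm W L' /\
     forall x y z, W x y z -> iter_partial3 ds F x y z = sp L' x y z).
  { induction ds as [|i ds [L' [HL' Hk]]]. exists L; split; auto.
    exists (dL i L'); split. apply allsm_dL; auto.
    intros x y z Hp. change (partial3 i (iter_partial3 ds F) x y z = sp (dL i L') x y z).
    apply ip_unique.
    apply (ip_ext_loc W i _ (sp L')); auto. apply (sp_partial W); auto. }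
  intros ds x y z Hp. destruct (K ds) as [L' [HL' Hk]]. split.
  - apply (cont3_ext_loc W _ (sp L')); auto. apply (sp_cont W); auto.
  - intros i. eapply ip_ex. apply (ip_ext_loc W i _ (sp L')); auto. apply (sp_partial W); auto.
Qed.

Lemma smooth_mult W f g : open3 W -> smooth3 W f -> smooth3 W g ->
  smooth3 W (fun x y z => f x y z * g x y z).
Proof.
  intros HW Hf Hg. apply (smooth_sp_eq W _ ((f, g) :: nil)); auto.
  constructor; [split; auto|constructor]. intros; unfold sp; simpl; ring.
Qed.

Lemma smooth_plus W f g : open3 W -> smooth3 W f -> smooth3 W g ->
  smooth3 W (fun x y z => f x y z + g x y z).
Proof.
  intros HW Hf Hg. apply (smooth_sp_eq W _ ((f, fun _ _ _ => 1) :: (g, fun _ _ _ => 1) :: nil)); auto.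
  constructor; [split; [auto|apply (smooth_const W 1)]|].
  constructor; [split; [auto|apply (smooth_const W 1)]|constructor].
  intros; unfold sp; simpl; ring.
Qed.

Ltac dstep := lazymatch goal with
  | |- is_derive (fun t => @?a t * @?b t) _ _ => apply dmul
  | |- is_derive (fun t => @?a t + @?b t) _ _ => apply dplus
  | |- is_derive (fun t => @?a t - @?b t) _ _ => apply dminus
  | |- is_derive (fun t => t) _ _ => apply did
  | |- is_derive (fun t => ?c) _ _ => apply dconst
  | |- is_derive _ _ _ => eassumption
  end.
Ltac dtac := repeat dstep.
Lemma zero_deriv (f : R -> R) (a b l0 : R) : a < l0 < b ->
  (forall t, a < t < b -> is_derive f t 0) -> forall t, a < t < b -> f t = f l0.
Proof.
  intros Hl Hd t Ht.
  destruct (MVT_gen f l0 t (fun _ => 0)) as [c [_ Hc]].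
  - intros x Hx. apply Hd. unfold Rmin, Rmax in Hx. destruct (Rle_dec l0 t); lra.
  - intros x Hx. apply continuity_pt_filterlim. apply (ex_derive_continuous f).
    exists 0. apply Hd. unfold Rmin, Rmax in Hx. destruct (Rle_dec l0 t); lra.
  - lra.
Qed.

Lemma mobius (a b l0 : R) (G G1 G2 G3 H H1 H2 H3 : R -> R) : a < l0 < b ->
  (forall t, a < t < b ->
     is_derive G t (G1 t) /\ is_derive G1 t (G2 t) /\ is_derive G2 t (G3 t) /\
     is_derive H t (H1 t) /\ is_derive H1 t (H2 t) /\ is_derive H2 t (H3 t) /\
     G1 t <> 0 /\ 2 * G1 t * G3 t - 3 * G2 t ^ 2 = 0 /\
     2 * G1 t * H3 t - 3 * G2 t * H2 t = 0) ->
  forall t, a < t < b ->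
   let g0 := G l0 in let g1 := G1 l0 in let g2 := G2 l0 in
   let h0 := H l0 in let h1 := H1 l0 in let h2 := H2 l0 in
   let D := 2 * g1 - g2 * (t - l0) in
   D <> 0 /\
   G t * D = 2 * g1 * g0 + (2 * g1 ^ 2 - g0 * g2) * (t - l0) /\
   H t * D = 2 * g1 * h0 + (2 * g1 * h1 - g2 * h0) * (t - l0)
             + (g1 * h2 - g2 * h1) * (t - l0) ^ 2.
Proof.
  intros Hl Hyp.
  set (g0 := G l0). set (g1 := G1 l0). set (g2 := G2 l0).
  set (h0 := H l0). set (h1 := H1 l0). set (h2 := H2 l0).
  set (D := fun t => 2 * g1 - g2 * (t - l0)).
  assert (Hg1 : g1 <> 0) by (apply Hyp; auto).
  set (psi := fun t => G2 t * D t - 2 * g2 * G1 t).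
  assert (Hpsi : forall t, a < t < b -> psi t = 0).
  { set (phi := fun t => psi t * psi t / (G1 t * G1 t * G1 t)).
    assert (Hphi : forall t, a < t < b -> phi t = phi l0).
    { apply zero_deriv; auto. intros t Ht.
      destruct (Hyp t Ht) as (d0&d1&d2&_&_&_&n0&e1&_).
      unfold phi, psi, D.
      eapply deq. { apply is_derive_div; [dtac|dtac|]. cbv beta. 
        repeat apply Rmult_integral_contrapositive_currified; auto. }
      cbv beta.
      assert (E: G3 t = 3 * G2 t ^ 2 / (2 * G1 t)) by (field_simplify_eq; auto; lra).
      rewrite E. field. auto. }
    intros t Ht. specialize (Hphi t Ht).
    assert (phi l0 = 0). { unfold phi, psi, D. unfold g1, g2. replace (l0 - l0) with 0 by ring.
       unfold Rdiv. ring. }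
    destruct (Hyp t Ht) as (_&_&_&_&_&_&n0&_).
    rewrite H0 in Hphi. unfold phi in Hphi.
    assert (psi t * psi t = 0).
    { apply (Rmult_eq_reg_r (/ (G1 t * G1 t * G1 t))). lra.
      apply Rinv_neq_0_compat. repeat (apply Rmult_integral_contrapositive; split; auto). }
    nra. }
  assert (HD : forall t, a < t < b -> D t <> 0).
  { assert (Hk : forall t, a < t < b -> G1 t * D t * D t = G1 l0 * D l0 * D l0).
    { apply (zero_deriv (fun t => G1 t * D t * D t)); auto. intros t Ht.
      destruct (Hyp t Ht) as (d0&d1&d2&_&_&_&n0&e1&_).
      pose proof (Hpsi t Ht) as P.
      unfold D. eapply deq. { dtac. } cbv beta.
      transitivity (D t * psi t). { unfold psi, D; ring. } rewrite P; ring. }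
    intros t Ht E. specialize (Hk t Ht). rewrite E in Hk.
    replace (G1 l0 * D l0 * D l0) with (4 * (g1*g1*g1)) in Hk by (unfold D, g1; ring).
    assert (g1 * g1 * g1 = 0) by lra.
    apply Hg1. destruct (Rmult_integral _ _ H0) as [H1'|H1']; auto.
    destruct (Rmult_integral _ _ H1'); auto. }
  set (n1 := 2 * g1 ^ 2 - g0 * g2).
  assert (HE1 : forall t, a < t < b -> G1 t * D t - g2 * G t - n1 = 0).
  { intros t Ht.
    assert (Hk : forall t, a < t < b -> G1 t * D t - g2 * G t - n1 = G1 l0 * D l0 - g2 * G l0 - n1).
    { apply (zero_deriv (fun t => G1 t * D t - g2 * G t - n1)); auto. intros s Hs.
      destruct (Hyp s Hs) as (d0&d1&d2&_&_&_&n0&e1&_).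
      pose proof (Hpsi s Hs) as P.
      unfold D. eapply deq. { dtac. } cbv beta.
      transitivity (psi s). { unfold psi, D; ring. } rewrite P; ring. }
    rewrite (Hk t Ht). unfold D, n1, g0, g1, g2. ring. }
  assert (HE : forall t, a < t < b -> G t * D t - (2 * g1 * g0 + n1 * (t - l0)) = 0).
  { intros t Ht.
    assert (Hk : forall t, a < t < b -> G t * D t - (2 * g1 * g0 + n1 * (t - l0)) =
        G l0 * D l0 - (2 * g1 * g0 + n1 * (l0 - l0))).
    { apply (zero_deriv (fun t => G t * D t - (2 * g1 * g0 + n1 * (t - l0)))); auto. intros s Hs.
      destruct (Hyp s Hs) as (d0&d1&d2&_&_&_&n0&e1&_).
      pose proof (HE1 s Hs) as P.
      unfold D. eapply deq. { dtac. } cbv beta.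
      etransitivity; [|exact P]. unfold D. ring. }
    rewrite (Hk t Ht). unfold D, n1, g0, g1, g2. ring. }
  set (q1 := 2 * g1 * h1 - g2 * h0). set (q2 := g1 * h2 - g2 * h1).
  assert (HF2 : forall t, a < t < b -> H2 t * D t - 2 * g2 * H1 t - 2 * q2 = 0).
  { intros t Ht.
    assert (Hk : forall t, a < t < b -> H2 t * D t - 2 * g2 * H1 t - 2 * q2 =
        H2 l0 * D l0 - 2 * g2 * H1 l0 - 2 * q2).
    { apply (zero_deriv (fun t => H2 t * D t - 2 * g2 * H1 t - 2 * q2)); auto. intros s Hs.
      destruct (Hyp s Hs) as (d0&d1&d2&d3&d4&d5&n0&e1&e2).
      pose proof (Hpsi s Hs) as P.
      unfold D. eapply deq. { dtac. } cbv beta.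
      apply (Rmult_eq_reg_l (2 * G1 s)). 2: { apply Rmult_integral_contrapositive_currified; auto; lra. }
      transitivity (3 * H2 s * psi s + (2 * G1 s * H3 s - 3 * G2 s * H2 s) * D s). { unfold psi, D. ring. }
      rewrite P, e2; ring. }
    rewrite (Hk t Ht). unfold D, q2, h1, h2, g1, g2. ring. }
  assert (HF1 : forall t, a < t < b -> H1 t * D t - g2 * H t - (q1 + 2 * q2 * (t - l0)) = 0).
  { intros t Ht.
    assert (Hk : forall t, a < t < b -> H1 t * D t - g2 * H t - (q1 + 2 * q2 * (t - l0)) =
        H1 l0 * D l0 - g2 * H l0 - (q1 + 2 * q2 * (l0 - l0))).
    { apply (zero_deriv (fun t => H1 t * D t - g2 * H t - (q1 + 2 * q2 * (t - l0)))); auto. intros s Hs.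
      destruct (Hyp s Hs) as (d0&d1&d2&d3&d4&d5&n0&e1&e2).
      pose proof (HF2 s Hs) as P.
      unfold D. eapply deq. { dtac. } cbv beta.
      etransitivity; [|exact P]. unfold D. ring. }
    rewrite (Hk t Ht). unfold D, q1, q2, h0, h1, h2, g1, g2. ring. }
  assert (HF : forall t, a < t < b -> H t * D t - (2 * g1 * h0 + q1 * (t - l0) + q2 * (t - l0) * (t - l0)) = 0).
  { intros t Ht.
    assert (Hk : forall t, a < t < b -> H t * D t - (2 * g1 * h0 + q1 * (t - l0) + q2 * (t - l0) * (t - l0)) =
        H l0 * D l0 - (2 * g1 * h0 + q1 * (l0 - l0) + q2 * (l0 - l0) * (l0 - l0))).
    { apply (zero_deriv (fun t => H t * D t - (2 * g1 * h0 + q1 * (t - l0) + q2 * (t - l0) * (t - l0)))); auto. intros s Hs.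
      destruct (Hyp s Hs) as (d0&d1&d2&d3&d4&d5&n0&e1&e2).
      pose proof (HF1 s Hs) as P.
      unfold D. eapply deq. { dtac. } cbv beta.
      etransitivity; [|exact P]. unfold D. ring. }
    rewrite (Hk t Ht). unfold D, q1, q2, h0, h1, h2, g1, g2. ring. }
  intros t Ht. cbv zeta. split; [|split].
  - apply (HD t Ht).
  - pose proof (HE t Ht). unfold D, n1 in *. lra.
  - pose proof (HF t Ht). unfold D, q1, q2 in *. nra.
Qed.

Fixpoint ssum (f : nat -> R) (n : nat) : R :=
  match n with O => 0 | S n => ssum f n + f n end.

Lemma ssum_ext f g n : (forall i, (i < n)%nat -> f i = g i) -> ssum f n = ssum g n.
Proof. induction n; simpl; intros; auto. rewrite IHn, H; auto; intros; apply H; lia. Qed.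

Lemma ssum_sumf f N : sum_f_R0 f N = ssum f (S N).
Proof. induction N; simpl; auto. lra. rewrite IHN. simpl. auto. Qed.

Lemma ssum_plus f g n : ssum (fun i => f i + g i) n = ssum f n + ssum g n.
Proof. induction n; simpl; auto. lra. rewrite IHn; ring. Qed.

Lemma ssum_scal k f n : ssum (fun i => k * f i) n = k * ssum f n.
Proof. induction n; simpl; auto. ring. rewrite IHn; ring. Qed.

Lemma ssum_le f g n : (forall i, (i < n)%nat -> f i <= g i) -> ssum f n <= ssum g n.
Proof. induction n; simpl; intros; auto. lra. assert (f n <= g n) by (apply H; lia).
  assert (ssum f n <= ssum g n) by (apply IHn; intros; apply H; lia). lra. Qed.

Lemma ssum_nonneg f n : (forall i, 0 <= f i) -> 0 <= ssum f n.
Proof. induction n; simpl; intros; auto. lra. specialize (IHn H). specialize (H n). lra. Qed.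

Lemma ssum_mono f n n' : (forall i, 0 <= f i) -> (n <= n')%nat -> ssum f n <= ssum f n'.
Proof. intros H Hn. induction Hn; auto. lra. simpl. specialize (H m). lra. Qed.

Lemma ssum_exch (F : nat -> nat -> R) n m :
  ssum (fun i => ssum (fun j => F i j) m) n = ssum (fun j => ssum (fun i => F i j) n) m.
Proof.
  induction n; simpl.
  - induction m; simpl; auto. lra.
  - rewrite IHn. rewrite <- ssum_plus. auto.
Qed.

Lemma box1 (x y X Y : nat -> R) n n' :
  (forall i, Rabs (x i - y i) <= X i - Y i) -> (forall i, Rabs (x i) <= X i) -> (n <= n')%nat ->
  Rabs (ssum x n' - ssum y n) <= ssum X n' - ssum Y n.
Proof.
  intros H1 H2 Hn. induction Hn.
  - induction n; simpl. rewrite Rminus_eq_0, Rabs_R0; lra.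
    replace (ssum x n + x n - (ssum y n + y n)) with ((ssum x n - ssum y n) + (x n - y n)) by ring.
    eapply Rle_trans. apply Rabs_triang. specialize (H1 n). lra.
  - simpl. replace (ssum x m + x m - ssum y n) with ((ssum x m - ssum y n) + x m) by ring.
    eapply Rle_trans. apply Rabs_triang. specialize (H2 m). lra.
Qed.

Lemma abs1 (x X : nat -> R) n : (forall i, Rabs (x i) <= X i) -> Rabs (ssum x n) <= ssum X n.
Proof.
  intros H. replace (ssum x n) with (ssum x n - ssum (fun _ => 0) 0) by (simpl; ring).
  replace (ssum X n) with (ssum X n - ssum (fun _ => 0) 0) by (simpl; ring).
  apply box1. intros i; rewrite !Rminus_0_r; auto. auto. lia.
Qed.

Definition S4 (T : nat -> nat -> nat -> nat -> R) (n1 n2 n3 n4 : nat) : R :=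
  ssum (fun i => ssum (fun j => ssum (fun k => ssum (fun m => T i j k m) n4) n3) n2) n1.

Lemma box4 (T U : nat -> nat -> nat -> nat -> R) n1 n2 n3 n4 n1' n2' n3' n4' :
  (forall i j k m, Rabs (T i j k m) <= U i j k m) ->
  (n1 <= n1')%nat -> (n2 <= n2')%nat -> (n3 <= n3')%nat -> (n4 <= n4')%nat ->
  Rabs (S4 T n1' n2' n3' n4' - S4 T n1 n2 n3 n4) <= S4 U n1' n2' n3' n4' - S4 U n1 n2 n3 n4.
Proof.
  intros H h1 h2 h3 h4. unfold S4.
  assert (A4 : forall i j k, Rabs (ssum (fun m => T i j k m) n4') <= ssum (fun m => U i j k m) n4')
    by (intros; apply abs1; auto).
  assert (A3 : forall i j, Rabs (ssum (fun k => ssum (fun m => T i j k m) n4') n3') <=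
                           ssum (fun k => ssum (fun m => U i j k m) n4') n3')
    by (intros; apply abs1; auto).
  assert (A2 : forall i, Rabs (ssum (fun j => ssum (fun k => ssum (fun m => T i j k m) n4') n3') n2') <=
                           ssum (fun j => ssum (fun k => ssum (fun m => U i j k m) n4') n3') n2')
    by (intros; apply abs1; auto).
  apply box1; [intros i| intros i; apply A2 | auto].
  apply box1; [intros j| intros j; apply A3 | auto].
  apply box1; [intros k| intros k; apply A4 | auto].
  apply box1; auto. intros; rewrite !Rminus_eq_0, Rabs_R0; lra.
Qed.

Lemma abs4 (T U : nat -> nat -> nat -> nat -> R) n1 n2 n3 n4 :
  (forall i j k m, Rabs (T i j k m) <= U i j k m) ->
  Rabs (S4 T n1 n2 n3 n4) <= S4 U n1 n2 n3 n4.
Proof.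
  intros H. unfold S4. apply abs1; intros i. apply abs1; intros j. apply abs1; intros k. apply abs1; auto.
Qed.

Lemma mono4 (U : nat -> nat -> nat -> nat -> R) n1 n2 n3 n4 n1' n2' n3' n4' :
  (forall i j k m, 0 <= U i j k m) ->
  (n1 <= n1')%nat -> (n2 <= n2')%nat -> (n3 <= n3')%nat -> (n4 <= n4')%nat ->
  S4 U n1 n2 n3 n4 <= S4 U n1' n2' n3' n4'.
Proof.
  intros H h1 h2 h3 h4. pose proof (box4 U U n1 n2 n3 n4 n1' n2' n3' n4') as K.
  assert (Rabs (S4 U n1' n2' n3' n4' - S4 U n1 n2 n3 n4) <= S4 U n1' n2' n3' n4' - S4 U n1 n2 n3 n4).
  { apply K; auto. intros; rewrite Rabs_pos_eq; auto; lra. }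
  pose proof (Rabs_pos (S4 U n1' n2' n3' n4' - S4 U n1 n2 n3 n4)). lra.
Qed.

Lemma le4 (T U : nat -> nat -> nat -> nat -> R) n1 n2 n3 n4 :
  (forall i j k m, T i j k m <= U i j k m) -> S4 T n1 n2 n3 n4 <= S4 U n1 n2 n3 n4.
Proof.
  intros H. unfold S4. apply ssum_le; intros i _. apply ssum_le; intros j _.
  apply ssum_le; intros k _. apply ssum_le; auto.
Qed.

Definition coef := nat -> nat -> nat -> nat -> R.
Definition term (c : coef) a b d e : coef := fun i j k m => c i j k m * a ^ i * b ^ j * d ^ k * e ^ m.
Definition bs (c : coef) a b d e n1 n2 n3 n4 := S4 (term c a b d e) n1 n2 n3 n4.
Definition ac (c : coef) : coef := fun i j k m => Rabs (c i j k m).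
Definition Aseq (c : coef) r n := bs (ac c) r r r r n n n n.
Definition Bnd (c : coef) r := 0 <= r /\ exists B, forall n, Aseq c r n <= B.
Definition PS (c : coef) a b d e : R := real (Lim_seq (fun n => bs c a b d e n n n n)).

Lemma term_bound c a b d e r : Rabs a <= r -> Rabs b <= r -> Rabs d <= r -> Rabs e <= r ->
  forall i j k m, Rabs (term c a b d e i j k m) <= term (ac c) r r r r i j k m.
Proof.
  intros ha hb hd he i j k m. unfold term, ac. rewrite !Rabs_mult, <- !RPow_abs.
  pose proof (Rabs_pos a). pose proof (Rabs_pos b). pose proof (Rabs_pos d). pose proof (Rabs_pos e).
  pose proof (Rabs_pos (c i j k m)).
  apply Rmult_le_compat; [repeat apply Rmult_le_pos; auto; apply pow_le; auto|apply pow_le; auto| |apply pow_incr; auto].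
  apply Rmult_le_compat; [repeat apply Rmult_le_pos; auto; apply pow_le; auto|apply pow_le; auto| |apply pow_incr; auto].
  apply Rmult_le_compat; [repeat apply Rmult_le_pos; auto; apply pow_le; auto|apply pow_le; auto| |apply pow_incr; auto].
  apply Rmult_le_compat; auto; [apply pow_le; auto|lra|apply pow_incr; auto].
Qed.

Lemma term_ac_nonneg c r : 0 <= r -> forall i j k m, 0 <= term (ac c) r r r r i j k m.
Proof. intros. unfold term, ac. repeat apply Rmult_le_pos; try apply pow_le; auto. apply Rabs_pos. Qed.

Lemma Aseq_mono c r n n' : 0 <= r -> (n <= n')%nat -> Aseq c r n <= Aseq c r n'.
Proof. intros. unfold Aseq, bs. apply mono4; auto. apply term_ac_nonneg; auto. Qed.

Lemma Aseq_lim c r : Bnd c r -> { l | Un_cv (Aseq c r) l /\ forall n, Aseq c r n <= l }.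
Proof.
  intros Hb. assert (Hg : Un_growing (Aseq c r)).
  { intros n. apply Aseq_mono; try lia. apply Hb. }
  assert (Hu : has_ub (Aseq c r)).
  { destruct Hb as [_ [B HB]]. exists B. intros x [n ->]. auto. }
  destruct (growing_cv _ Hg Hu) as [l Hl]. exists l. split; auto.
  apply growing_ineq; auto.
Qed.

Lemma lim_le (u : nat -> R) l v K N : Un_cv u l -> (forall M, (M >= N)%nat -> Rabs (u M - v) <= K) ->
  Rabs (l - v) <= K.
Proof.
  intros Hu H. destruct (Rle_dec (Rabs (l - v)) K) as [h|h]; auto. exfalso.
  destruct (Hu (Rabs (l - v) - K)) as [N0 HN0]. lra.
  specialize (HN0 (max N N0) ltac:(lia)). specialize (H (max N N0) ltac:(lia)).
  unfold Rdist in HN0.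
  pose proof (Rabs_triang (l - u (max N N0)) (u (max N N0) - v)).
  replace (l - u (max N N0) + (u (max N N0) - v)) with (l - v) in H0 by ring.
  rewrite Rabs_minus_sym in HN0. lra.
Qed.


Lemma bs_box_diff (c : coef) (r a b d e : R) (Hb : Bnd c r) (ha : Rabs a <= r) (hb : Rabs b <= r) (hd : Rabs d <= r) (he : Rabs e <= r) n1 n2 n3 n4 n1' n2' n3' n4' :
  (n1 <= n1')%nat -> (n2 <= n2')%nat -> (n3 <= n3')%nat -> (n4 <= n4')%nat ->
  Rabs (bs c a b d e n1' n2' n3' n4' - bs c a b d e n1 n2 n3 n4) <=
  bs (ac c) r r r r n1' n2' n3' n4' - bs (ac c) r r r r n1 n2 n3 n4.
Proof. intros. unfold bs. apply box4; auto. apply term_bound; auto. Qed.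

Lemma PS_cv (c : coef) (r a b d e : R) (Hb : Bnd c r) (ha : Rabs a <= r) (hb : Rabs b <= r) (hd : Rabs d <= r) (he : Rabs e <= r) : Un_cv (fun n => bs c a b d e n n n n) (PS c a b d e).
Proof.
  assert (Hc : Cauchy_crit (fun n => bs c a b d e n n n n)).
  { destruct (Aseq_lim c r Hb) as [l [Hl _]].
    pose proof (CV_Cauchy _ (exist _ l Hl)) as Hcc.
    intros eps He. destruct (Hcc eps He) as [N HN]. exists N. intros n m Hn Hm.
    specialize (HN n m Hn Hm). unfold Rdist in *.
    destruct (Compare_dec.le_dec n m).
    - rewrite Rabs_minus_sym. eapply Rle_lt_trans. apply (bs_box_diff c r a b d e Hb ha hb hd he); auto.
      rewrite Rabs_minus_sym in HN. unfold Aseq in HN.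
      eapply Rle_lt_trans. apply Rle_abs. auto.
    - eapply Rle_lt_trans. apply (bs_box_diff c r a b d e Hb ha hb hd he); lia.
      unfold Aseq in HN. eapply Rle_lt_trans. apply Rle_abs. auto. }
  destruct (Rcomplete.R_complete _ Hc) as [l Hl].
  unfold PS. rewrite (is_lim_seq_unique _ l). simpl; auto.
  apply is_lim_seq_Reals; auto.
Qed.

Lemma PS_close (c : coef) (r a b d e : R) (Hb : Bnd c r) (ha : Rabs a <= r) (hb : Rabs b <= r) (hd : Rabs d <= r) (he : Rabs e <= r) (l : R) : Un_cv (Aseq c r) l ->
  forall N n1 n2 n3 n4, (N <= n1)%nat -> (N <= n2)%nat -> (N <= n3)%nat -> (N <= n4)%nat ->
  (forall n, Aseq c r n <= l) ->
  Rabs (bs c a b d e n1 n2 n3 n4 - PS c a b d e) <= 2 * (l - Aseq c r N).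
Proof.
  intros Hl N n1 n2 n3 n4 h1 h2 h3 h4 Hle.
  assert (K1 : Rabs (bs c a b d e n1 n2 n3 n4 - bs c a b d e N N N N) <= l - Aseq c r N).
  { eapply Rle_trans. apply (bs_box_diff c r a b d e Hb ha hb hd he); auto.
    set (M := max (max n1 n2) (max n3 n4)).
    assert (bs (ac c) r r r r n1 n2 n3 n4 <= Aseq c r M).
    { unfold Aseq, bs. apply mono4; try lia. apply term_ac_nonneg. apply Hb. }
    specialize (Hle M). unfold Aseq in *. lra. }
  assert (K2 : Rabs (PS c a b d e - bs c a b d e N N N N) <= l - Aseq c r N).
  { apply (lim_le _ _ _ _ N (PS_cv c r a b d e Hb ha hb hd he)). intros M HM.
    eapply Rle_trans. apply (bs_box_diff c r a b d e Hb ha hb hd he); auto.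
    specialize (Hle M). unfold Aseq in *. lra. }
  pose proof (Rabs_triang (bs c a b d e n1 n2 n3 n4 - bs c a b d e N N N N)
                          (bs c a b d e N N N N - PS c a b d e)).
  replace (bs c a b d e n1 n2 n3 n4 - bs c a b d e N N N N + (bs c a b d e N N N N - PS c a b d e))
    with (bs c a b d e n1 n2 n3 n4 - PS c a b d e) in H by ring.
  rewrite Rabs_minus_sym in K2.
  assert (0 <= l - Aseq c r N) by (specialize (Hle N); lra). lra.
Qed.

Lemma PS_bound (c : coef) (r a b d e : R) (Hb : Bnd c r) (ha : Rabs a <= r) (hb : Rabs b <= r) (hd : Rabs d <= r) (he : Rabs e <= r) : forall B, (forall n, Aseq c r n <= B) -> Rabs (PS c a b d e) <= B.
Proof.
  intros B HB. replace (PS c a b d e) with (PS c a b d e - 0) by ring.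
  apply (lim_le _ _ _ _ O (PS_cv c r a b d e Hb ha hb hd he)). intros M _. rewrite Rminus_0_r.
  eapply Rle_trans. unfold bs. apply abs4. apply (term_bound c a b d e r); auto. apply HB.
Qed.

Lemma S4_ext (T U : coef) n1 n2 n3 n4 : (forall i j k m, T i j k m = U i j k m) ->
  S4 T n1 n2 n3 n4 = S4 U n1 n2 n3 n4.
Proof.
  intros H. unfold S4. apply ssum_ext; intros. apply ssum_ext; intros.
  apply ssum_ext; intros. apply ssum_ext; intros. auto.
Qed.

Lemma S4_sw12 (T : coef) n : S4 (fun i j k m => T j i k m) n n n n = S4 T n n n n.
Proof. unfold S4. exact (ssum_exch (fun i j => ssum (fun k => ssum (fun m => T j i k m) n) n) n n). Qed.

Lemma S4_sw13 (T : coef) n : S4 (fun i j k m => T k j i m) n n n n = S4 T n n n n.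
Proof.
  unfold S4.
  set (Y := fun k j i => ssum (fun m => T k j i m) n).
  change (ssum (fun i => ssum (fun j => ssum (fun k => Y k j i) n) n) n =
          ssum (fun k => ssum (fun j => ssum (fun i => Y k j i) n) n) n).
  transitivity (ssum (fun i => ssum (fun k => ssum (fun j => Y k j i) n) n) n).
  { apply ssum_ext; intros i _. exact (ssum_exch (fun j k => Y k j i) n n). }
  rewrite (ssum_exch (fun i k => ssum (fun j => Y k j i) n) n n).
  apply ssum_ext; intros k _. exact (ssum_exch (fun i j => Y k j i) n n).
Qed.

Lemma S4_sw14 (T : coef) n : S4 (fun i j k m => T m j k i) n n n n = S4 T n n n n.
Proof.
  unfold S4.
  transitivity (ssum (fun i => ssum (fun j => ssum (fun m => ssum (fun k => T m j k i) n) n) n) n).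
  { apply ssum_ext; intros i _. apply ssum_ext; intros j _.
    exact (ssum_exch (fun k m => T m j k i) n n). }
  transitivity (ssum (fun i => ssum (fun m => ssum (fun j => ssum (fun k => T m j k i) n) n) n) n).
  { apply ssum_ext; intros i _.
    exact (ssum_exch (fun j m => ssum (fun k => T m j k i) n) n n). }
  rewrite (ssum_exch (fun i m => ssum (fun j => ssum (fun k => T m j k i) n) n) n n).
  apply ssum_ext; intros m _.
  transitivity (ssum (fun j => ssum (fun i => ssum (fun k => T m j k i) n) n) n).
  { exact (ssum_exch (fun i j => ssum (fun k => T m j k i) n) n n). }
  apply ssum_ext; intros j _.
  exact (ssum_exch (fun i k => T m j k i) n n).
Qed.

Definition sw12 (c : coef) : coef := fun i j k m => c j i k m.
Definition sw13 (c : coef) : coef := fun i j k m => c k j i m.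
Definition sw14 (c : coef) : coef := fun i j k m => c m j k i.

Lemma bs_sw12 c a b d e n : bs (sw12 c) b a d e n n n n = bs c a b d e n n n n.
Proof.
  unfold bs. rewrite <- S4_sw12. apply S4_ext. intros; unfold term, sw12; ring.
Qed.
Lemma bs_sw13 c a b d e n : bs (sw13 c) d b a e n n n n = bs c a b d e n n n n.
Proof.
  unfold bs. rewrite <- S4_sw13. apply S4_ext. intros; unfold term, sw13; ring.
Qed.
Lemma bs_sw14 c a b d e n : bs (sw14 c) e b d a n n n n = bs c a b d e n n n n.
Proof.
  unfold bs. rewrite <- S4_sw14. apply S4_ext. intros; unfold term, sw14; ring.
Qed.

Lemma PS_sw12 c a b d e : PS (sw12 c) b a d e = PS c a b d e.
Proof. unfold PS. rewrite (Lim_seq_ext _ _ (bs_sw12 c a b d e)). auto. Qed.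
Lemma PS_sw13 c a b d e : PS (sw13 c) d b a e = PS c a b d e.
Proof. unfold PS. rewrite (Lim_seq_ext _ _ (bs_sw13 c a b d e)). auto. Qed.
Lemma PS_sw14 c a b d e : PS (sw14 c) e b d a = PS c a b d e.
Proof. unfold PS. rewrite (Lim_seq_ext _ _ (bs_sw14 c a b d e)). auto. Qed.

Lemma Bnd_sw12 c r : Bnd c r -> Bnd (sw12 c) r.
Proof. intros [h [B HB]]. split; auto. exists B. intros n. unfold Aseq.
  change (ac (sw12 c)) with (sw12 (ac c)). rewrite bs_sw12. apply HB. Qed.
Lemma Bnd_sw13 c r : Bnd c r -> Bnd (sw13 c) r.
Proof. intros [h [B HB]]. split; auto. exists B. intros n. unfold Aseq.
  change (ac (sw13 c)) with (sw13 (ac c)). rewrite bs_sw13. apply HB. Qed.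
Lemma Bnd_sw14 c r : Bnd c r -> Bnd (sw14 c) r.
Proof. intros [h [B HB]]. split; auto. exists B. intros n. unfold Aseq.
  change (ac (sw14 c)) with (sw14 (ac c)). rewrite bs_sw14. apply HB. Qed.

Definition D1 (c : coef) : coef := fun i j k m => INR (S i) * c (S i) j k m.

Lemma geom_sum q n : ssum (fun j => q ^ j) n * (1 - q) = 1 - q ^ n.
Proof. induction n; simpl. ring. rewrite Rmult_plus_distr_r, IHn. ring. Qed.

Lemma lin_geom q : 0 <= q <= 1 -> forall i, INR (S i) * q ^ i <= ssum (fun j => q ^ j) (S i).
Proof.
  intros Hq. induction i.
  - simpl. lra.
  - rewrite S_INR. change (ssum (fun j => q ^ j) (S (S i))) with (ssum (fun j => q ^ j) (S i) + q ^ (S i)).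
    assert (0 <= ssum (fun j => q ^ j) (S i)) by (apply ssum_nonneg; intros; apply pow_le; lra).
    simpl pow. 
    assert (q * (INR (S i) * q ^ i) <= q * ssum (fun j => q ^ j) (S i)) by (apply Rmult_le_compat_l; lra).
    assert (q * ssum (fun j => q ^ j) (S i) <= ssum (fun j => q ^ j) (S i)) by nra.
    rewrite S_INR in *. nra.
Qed.

Lemma lin_pow_bound r1 r : 0 <= r1 < r -> forall i, INR (S i) * r1 ^ i <= / (r - r1) * r ^ (S i).
Proof.
  intros Hr i. set (q := r1 / r).
  assert (Hr0 : 0 < r) by lra.
  assert (Hq : 0 <= q < 1).
  { unfold q. split. apply Rmult_le_pos; [lra|left; apply Rinv_0_lt_compat; lra].
    apply (Rmult_lt_reg_r r); auto. unfold Rdiv. rewrite Rmult_assoc, Rinv_l; lra. }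
  assert (E : r1 = q * r) by (unfold q; field; lra).
  pose proof (lin_geom q ltac:(lra) i) as L1.
  pose proof (geom_sum q (S i)) as L2.
  assert (L3 : ssum (fun j => q ^ j) (S i) <= / (1 - q)).
  { apply (Rmult_le_reg_r (1 - q)). lra. rewrite L2, Rinv_l; [|lra].
    pose proof (pow_le q (S i) ltac:(lra)). lra. }
  rewrite E, Rpow_mult_distr.
  replace (/ (r - q * r) * r ^ S i) with (/ (1 - q) * r ^ i) by (simpl; field; split; lra).
  pose proof (pow_le r i ltac:(lra)).
  rewrite <- Rmult_assoc. apply Rmult_le_compat_r; auto. lra.
Qed.

Lemma ssum_shift f n : ssum (fun i => f (S i)) n + f O = ssum f (S n).
Proof. induction n. simpl; ring.
  change (ssum (fun i => f (S i)) (S n)) with (ssum (fun i => f (S i)) n + f (S n)).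
  change (ssum f (S (S n))) with (ssum f (S n) + f (S n)). rewrite <- IHn. ring. Qed.

Lemma S4_shift (U : coef) n : (forall i j k m, 0 <= U i j k m) ->
  S4 (fun i j k m => U (S i) j k m) n n n n <= S4 U (S n) (S n) (S n) (S n).
Proof.
  intros H. unfold S4.
  set (G := fun i => ssum (fun j => ssum (fun k => ssum (fun m => U i j k m) (S n)) (S n)) (S n)).
  rewrite <- ssum_shift.
  assert (0 <= G O) by (unfold G; repeat (apply ssum_nonneg; intros); auto).
  assert (ssum (fun i => ssum (fun j => ssum (fun k => ssum (fun m => U (S i) j k m) n) n) n) n <=
          ssum (fun i => G (S i)) n).
  { apply ssum_le; intros i _. unfold G.
    pose proof (mono4 (fun i0 j k m => U (S i) j k m) 1 n n n 1 (S n) (S n) (S n)) as M.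
    unfold S4 in M. simpl in M. rewrite !Rplus_0_l in M. apply M; auto; lia. }
  fold G. lra.
Qed.

Lemma S4_scal K (T : coef) n1 n2 n3 n4 :
  S4 (fun i j k m => K * T i j k m) n1 n2 n3 n4 = K * S4 T n1 n2 n3 n4.
Proof.
  unfold S4. rewrite <- ssum_scal. apply ssum_ext; intros. rewrite <- ssum_scal.
  apply ssum_ext; intros. rewrite <- ssum_scal. apply ssum_ext; intros.
  rewrite <- ssum_scal. auto.
Qed.

Lemma Bnd_D1 c r r1 : Bnd c r -> 0 <= r1 < r -> Bnd (D1 c) r1.
Proof.
  intros [h0 [B HB]] Hr. split. lra.
  set (K := / (r - r1)). assert (HK : 0 < K) by (apply Rinv_0_lt_compat; lra).
  exists (K * B). intros n. unfold Aseq, bs.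
  eapply Rle_trans. apply (le4 _ (fun i j k m => K * term (ac c) r r r r (S i) j k m)).
  - intros i j k m. unfold term, ac, D1. rewrite Rabs_mult, Rabs_pos_eq; [|apply pos_INR].
    pose proof (lin_pow_bound r1 r Hr i).
    pose proof (Rabs_pos (c (S i) j k m)).
    assert (r1 ^ j <= r ^ j) by (apply pow_incr; lra).
    assert (r1 ^ k <= r ^ k) by (apply pow_incr; lra).
    assert (r1 ^ m <= r ^ m) by (apply pow_incr; lra).
    pose proof (pow_le r1 j ltac:(lra)). pose proof (pow_le r1 k ltac:(lra)). pose proof (pow_le r1 m ltac:(lra)).
    pose proof (pow_le r j ltac:(lra)). pose proof (pow_le r k ltac:(lra)). pose proof (pow_le r m ltac:(lra)).
    pose proof (pow_le r1 i ltac:(lra)).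
    set (a := Rabs (c (S i) j k m)) in *.
    replace (INR (S i) * a * r1 ^ i * r1 ^ j * r1 ^ k * r1 ^ m) with
      (a * (INR (S i) * r1 ^ i) * (r1 ^ j * r1 ^ k * r1 ^ m)) by ring.
    replace (K * (a * r ^ S i * r ^ j * r ^ k * r ^ m)) with
      (a * (K * r ^ S i) * (r ^ j * r ^ k * r ^ m)) by ring.
    assert (0 <= INR (S i) * r1 ^ i) by (apply Rmult_le_pos; auto; apply pos_INR).
    apply Rmult_le_compat; try apply Rmult_le_pos; auto.
    + apply Rmult_le_pos; auto.
    + apply Rmult_le_compat_l; auto.
    + apply Rmult_le_compat; try apply Rmult_le_pos; auto. apply Rmult_le_compat; auto.
  - rewrite S4_scal. apply Rmult_le_compat_l. lra.
    eapply Rle_trans. apply (S4_shift (term (ac c) r r r r)). apply term_ac_nonneg; auto.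
    apply (HB (S n)).
Qed.

Lemma poly_deriv (w : nat -> R) n x :
  is_derive (fun t => ssum (fun i => w i * t ^ i) n) x (ssum (fun i => INR (S i) * w (S i) * x ^ i) (pred n)).
Proof.
  induction n.
  - simpl. apply dconst.
  - simpl ssum at 1. eapply deq.
    + apply dplus. apply IHn. apply dmul. apply dconst. apply (is_derive_pow (fun t => t) n x 1). apply did.
    + destruct n; simpl; ring.
Qed.

Lemma pull3 (a : R) (X : nat -> nat -> nat -> R) n2 n3 n4 :
  ssum (fun j => ssum (fun k => ssum (fun m => a * X j k m) n4) n3) n2 =
  a * ssum (fun j => ssum (fun k => ssum (fun m => X j k m) n4) n3) n2.
Proof.
  rewrite <- ssum_scal. apply ssum_ext; intros. rewrite <- ssum_scal.
  apply ssum_ext; intros. rewrite <- ssum_scal. auto.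
Qed.

Definition Kc (c : coef) b d e n2 n3 n4 i :=
  ssum (fun j => ssum (fun k => ssum (fun m => c i j k m * b ^ j * d ^ k * e ^ m) n4) n3) n2.

Lemma bs_poly c t b d e n1 n2 n3 n4 :
  bs c t b d e n1 n2 n3 n4 = ssum (fun i => Kc c b d e n2 n3 n4 i * t ^ i) n1.
Proof.
  unfold bs, S4, Kc. apply ssum_ext; intros i _. rewrite Rmult_comm, <- pull3.
  apply ssum_ext; intros. apply ssum_ext; intros. apply ssum_ext; intros.
  unfold term; ring.
Qed.

Lemma bs_deriv1 c b d e n1 n2 n3 n4 x :
  is_derive (fun t => bs c t b d e n1 n2 n3 n4) x (bs (D1 c) x b d e (pred n1) n2 n3 n4).
Proof.
  eapply is_derive_ext. { intros t. symmetry. apply bs_poly. }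
  eapply deq. apply poly_deriv.
  rewrite bs_poly. apply ssum_ext; intros i _.
  replace (Kc (D1 c) b d e n2 n3 n4 i) with (INR (S i) * Kc c b d e n2 n3 n4 (S i)). ring.
  unfold Kc, D1. rewrite <- (pull3 (INR (S i))).
  apply ssum_ext; intros. apply ssum_ext; intros. apply ssum_ext; intros. ring.
Qed.

Lemma Bnd_mono c r r1 : Bnd c r -> 0 <= r1 <= r -> Bnd c r1.
Proof.
  intros [h0 [B HB]] Hr. split. lra. exists B. intros n. eapply Rle_trans; [|apply (HB n)].
  unfold Aseq, bs. apply le4. intros. unfold term, ac.
  pose proof (Rabs_pos (c i j k m)).
  assert (r1 ^ i <= r ^ i) by (apply pow_incr; lra).
  assert (r1 ^ j <= r ^ j) by (apply pow_incr; lra).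
  assert (r1 ^ k <= r ^ k) by (apply pow_incr; lra).
  assert (r1 ^ m <= r ^ m) by (apply pow_incr; lra).
  pose proof (pow_le r1 i ltac:(lra)). pose proof (pow_le r1 j ltac:(lra)).
  pose proof (pow_le r1 k ltac:(lra)). pose proof (pow_le r1 m ltac:(lra)).
  apply Rmult_le_compat; auto. repeat apply Rmult_le_pos; auto.
  apply Rmult_le_compat; auto. repeat apply Rmult_le_pos; auto.
  apply Rmult_le_compat; auto. repeat apply Rmult_le_pos; auto.
  apply Rmult_le_compat; auto. lra.
Qed.

Lemma PS_unif c r : Bnd c r -> forall eps, 0 < eps -> exists N, forall n1 n2 n3 n4 a b d e,
  (N <= n1)%nat -> (N <= n2)%nat -> (N <= n3)%nat -> (N <= n4)%nat ->
  Rabs a <= r -> Rabs b <= r -> Rabs d <= r -> Rabs e <= r ->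
  Rabs (bs c a b d e n1 n2 n3 n4 - PS c a b d e) < eps.
Proof.
  intros Hb eps He. destruct (Aseq_lim c r Hb) as [l [Hl Hle]].
  destruct (Hl (eps / 2)) as [N HN]. lra.
  exists N. intros. eapply Rle_lt_trans. apply (PS_close c r a b d e); eauto.
  specialize (HN N (le_n N)). unfold Rdist in HN. rewrite Rabs_minus_sym in HN.
  specialize (Hle N). rewrite Rabs_pos_eq in HN; lra.
Qed.

Lemma PS_deriv1 c r a b d e : Bnd c r -> Rabs a < r -> Rabs b < r -> Rabs d < r -> Rabs e < r ->
  is_derive (fun t => PS c t b d e) a (PS (D1 c) a b d e).
Proof.
  intros Hb ha hb hd he.
  set (M := Rmax (Rmax (Rabs a) (Rabs b)) (Rmax (Rabs d) (Rabs e))).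
  assert (HM : M < r) by (unfold M; repeat apply Rmax_lub_lt; auto).
  assert (HM0 : 0 <= M) by (unfold M; eapply Rle_trans; [apply Rabs_pos|]; eapply Rle_trans; apply Rmax_l).
  set (r1 := (M + r) / 2).
  assert (HMr1 : M < r1 < r) by (unfold r1; lra).
  assert (Ha1 : Rabs a <= M) by (unfold M; eapply Rle_trans; apply Rmax_l).
  assert (Hb1 : Rabs b <= M) by (unfold M; eapply Rle_trans; [apply Rmax_r|apply Rmax_l]).
  assert (Hd1 : Rabs d <= M) by (unfold M; eapply Rle_trans; [apply Rmax_l|apply Rmax_r]).
  assert (He1 : Rabs e <= M) by (unfold M; eapply Rle_trans; apply Rmax_r).
  assert (Bc : Bnd c r1) by (apply (Bnd_mono c r); auto; unfold r1; lra).
  assert (Bd : Bnd (D1 c) r1) by (apply (Bnd_D1 c r); auto; unfold r1; lra).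
  set (fn := fun n t => bs c t b d e n n n n).
  set (D := fun t => - r1 < t /\ t < r1).
  assert (HD : forall t, D t -> Rabs t <= r1) by (intros t [h1 h2]; apply Rabs_le; lra).
  assert (Hder : forall n t, Derive (fn n) t = bs (D1 c) t b d e (pred n) n n n).
  { intros n t. apply is_derive_unique. apply bs_deriv1. }
  assert (Hlim : forall t, Rabs t <= r1 ->
     Lim_seq (fun n => Derive (fn n) t) = Finite (PS (D1 c) t b d e)).
  { intros t Ht. apply is_lim_seq_unique. apply is_lim_seq_Reals.
    intros eps He. destruct (PS_unif _ _ Bd eps He) as [N HN].
    exists (S N). intros n Hn. unfold Rdist. rewrite Hder. apply HN; try lia; lra. }
  pose proof (CVU_Derive fn D) as K.
  assert (Hres : is_derive (fun y => real (Lim_seq (fun n => fn n y))) a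
                           (real (Lim_seq (fun n => Derive (fn n) a)))).
  { apply K.
    - apply open_and. apply (open_gt (- r1)). apply (open_lt r1).
    - intros u v x Hu Hv Hx. unfold D in *. lra.
    - intros eps. destruct (PS_unif _ _ Bc eps (cond_pos eps)) as [N HN].
      exists N. intros n Hn t Ht. unfold fn. specialize (HN n n n n t b d e Hn Hn Hn Hn). assert (Rabs t <= r1) by (apply HD; auto). specialize (HN H ltac:(lra) ltac:(lra) ltac:(lra)). exact HN.
    - intros n t _. eexists. apply bs_deriv1.
    - intros n t _. apply (continuity_pt_ext (fun t => bs (D1 c) t b d e (pred n) n n n)).
      intros; symmetry; apply Hder.
      apply continuity_pt_filterlim. apply (ex_derive_continuous (fun t => bs (D1 c) t b d e (pred n) n n n)).
      eexists. apply bs_deriv1.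
    - intros eps. destruct (PS_unif _ _ Bd eps (cond_pos eps)) as [N HN].
      exists (S N). intros n Hn t Ht. rewrite Hlim; [|apply HD; auto]. simpl.
      rewrite Hder. assert (Rabs t <= r1) by (apply HD; auto).
      apply HN; try lia; try lra.
    - unfold D. assert (Hx : Rabs a < r1) by lra. apply Rabs_def2 in Hx. lra. }
  rewrite Hlim in Hres by lra. simpl in Hres. exact Hres.
Qed.

Definition D2 (c : coef) : coef := sw12 (D1 (sw12 c)).
Definition D3 (c : coef) : coef := sw13 (D1 (sw13 c)).
Definition D4 (c : coef) : coef := sw14 (D1 (sw14 c)).
Definition Dk (k : nat) (c : coef) : coef :=
  match k with O => D1 c | 1%nat => D2 c | 2%nat => D3 c | _ => D4 c end.

Lemma Bnd_Dk k c r r1 : Bnd c r -> 0 <= r1 < r -> Bnd (Dk k c) r1.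
Proof.
  intros Hb Hr. destruct k as [|[|[|k]]]; simpl.
  - apply (Bnd_D1 c r); auto.
  - apply Bnd_sw12. apply (Bnd_D1 _ r); auto. apply Bnd_sw12; auto.
  - apply Bnd_sw13. apply (Bnd_D1 _ r); auto. apply Bnd_sw13; auto.
  - apply Bnd_sw14. apply (Bnd_D1 _ r); auto. apply Bnd_sw14; auto.
Qed.

Lemma PS_deriv2 c r a b d e : Bnd c r -> Rabs a < r -> Rabs b < r -> Rabs d < r -> Rabs e < r ->
  is_derive (fun t => PS c a t d e) b (PS (D2 c) a b d e).
Proof.
  intros. eapply is_derive_ext. { intros t. apply (PS_sw12 c a t d e). }
  unfold D2. rewrite (PS_sw12 (D1 (sw12 c)) b a d e).
  apply (PS_deriv1 _ r); auto. apply Bnd_sw12; auto.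
Qed.
Lemma PS_deriv3 c r a b d e : Bnd c r -> Rabs a < r -> Rabs b < r -> Rabs d < r -> Rabs e < r ->
  is_derive (fun t => PS c a b t e) d (PS (D3 c) a b d e).
Proof.
  intros. eapply is_derive_ext. { intros t. apply (PS_sw13 c a b t e). }
  unfold D3. rewrite (PS_sw13 (D1 (sw13 c)) d b a e).
  apply (PS_deriv1 _ r); auto. apply Bnd_sw13; auto.
Qed.
Lemma PS_deriv4 c r a b d e : Bnd c r -> Rabs a < r -> Rabs b < r -> Rabs d < r -> Rabs e < r ->
  is_derive (fun t => PS c a b d t) e (PS (D4 c) a b d e).
Proof.
  intros. eapply is_derive_ext. { intros t. apply (PS_sw14 c a b d t). }
  unfold D4. rewrite (PS_sw14 (D1 (sw14 c)) e b d a).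
  apply (PS_deriv1 _ r); auto. apply Bnd_sw14; auto.
Qed.

Lemma mvt_bound (f f' : R -> R) a b B :
  (forall t, Rmin a b <= t <= Rmax a b -> is_derive f t (f' t) /\ Rabs (f' t) <= B) ->
  Rabs (f b - f a) <= B * Rabs (b - a).
Proof.
  intros H.
  destruct (MVT_gen f a b f') as [c [Hc E]].
  - intros t Ht. apply H; lra.
  - intros t Ht. apply continuity_pt_filterlim. apply (ex_derive_continuous f).
    exists (f' t). apply H; auto.
  - rewrite E, Rabs_mult. apply Rmult_le_compat_r. apply Rabs_pos. apply H; auto.
Qed.

Lemma seg_abs u v t s : Rmin u v <= t <= Rmax u v -> Rabs u < s -> Rabs v < s -> Rabs t < s.
Proof.
  intros [h1 h2] hu hv. apply Rabs_def2 in hu. apply Rabs_def2 in hv.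
  unfold Rmin, Rmax in *. apply Rabs_def1; destruct (Rle_dec u v); lra.
Qed.

Lemma PS_cont c r a b d e : Bnd c r -> Rabs a < r -> Rabs b < r -> Rabs d < r -> Rabs e < r ->
  forall eps, 0 < eps -> exists del, 0 < del /\ forall a' b' d' e',
    Rabs (a' - a) < del -> Rabs (b' - b) < del -> Rabs (d' - d) < del -> Rabs (e' - e) < del ->
    Rabs (PS c a' b' d' e' - PS c a b d e) < eps.
Proof.
  intros Hb ha hb hd he eps Heps.
  set (M := Rmax (Rmax (Rabs a) (Rabs b)) (Rmax (Rabs d) (Rabs e))).
  assert (HM : M < r) by (unfold M; repeat apply Rmax_lub_lt; auto).
  assert (HM0 : 0 <= M) by (unfold M; eapply Rle_trans; [apply Rabs_pos|]; eapply Rle_trans; apply Rmax_l).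
  assert (Ha1 : Rabs a <= M) by (unfold M; eapply Rle_trans; apply Rmax_l).
  assert (Hb1 : Rabs b <= M) by (unfold M; eapply Rle_trans; [apply Rmax_r|apply Rmax_l]).
  assert (Hd1 : Rabs d <= M) by (unfold M; eapply Rle_trans; [apply Rmax_l|apply Rmax_r]).
  assert (He1 : Rabs e <= M) by (unfold M; eapply Rle_trans; apply Rmax_r).
  set (r1 := (M + r) / 2). assert (HMr1 : M < r1 < r) by (unfold r1; lra).
  destruct (Bnd_Dk 0 c r r1 Hb ltac:(lra)) as [_ [B0 HB0]].
  destruct (Bnd_Dk 1 c r r1 Hb ltac:(lra)) as [_ [B1 HB1]].
  destruct (Bnd_Dk 2 c r r1 Hb ltac:(lra)) as [_ [B2 HB2]].
  destruct (Bnd_Dk 3 c r r1 Hb ltac:(lra)) as [_ [B3 HB3]].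
  set (B := Rmax (Rmax B0 B1) (Rmax B2 B3) + 1).
  assert (K0 : forall n, Aseq (Dk 0 c) r1 n <= B).
  { intros n. specialize (HB0 n). unfold B. pose proof (Rmax_l B0 B1). pose proof (Rmax_l (Rmax B0 B1) (Rmax B2 B3)). lra. }
  assert (K1 : forall n, Aseq (Dk 1 c) r1 n <= B).
  { intros n. specialize (HB1 n). unfold B. pose proof (Rmax_r B0 B1). pose proof (Rmax_l (Rmax B0 B1) (Rmax B2 B3)). lra. }
  assert (K2 : forall n, Aseq (Dk 2 c) r1 n <= B).
  { intros n. specialize (HB2 n). unfold B. pose proof (Rmax_l B2 B3). pose proof (Rmax_r (Rmax B0 B1) (Rmax B2 B3)). lra. }
  assert (K3 : forall n, Aseq (Dk 3 c) r1 n <= B).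
  { intros n. specialize (HB3 n). unfold B. pose proof (Rmax_r B2 B3). pose proof (Rmax_r (Rmax B0 B1) (Rmax B2 B3)). lra. }
  assert (HB : 0 < B).
  { assert (0 <= Aseq (Dk 0 c) r1 0) by (unfold Aseq, bs, S4; simpl; lra).
    specialize (HB0 0%nat). unfold B. pose proof (Rmax_l B0 B1). pose proof (Rmax_l (Rmax B0 B1) (Rmax B2 B3)). lra. }
  exists (Rmin (r1 - M) (eps / (4 * B))). split.
  { apply Rmin_pos. lra. apply Rdiv_lt_0_compat; lra. }
  intros a' b' d' e' h1 h2 h3 h4.
  pose proof (Rmin_l (r1 - M) (eps / (4 * B))). pose proof (Rmin_r (r1 - M) (eps / (4 * B))).
  assert (Ha' : Rabs a' < r1).
  { pose proof (Rabs_triang (a' - a) a). replace (a' - a + a) with a' in H1 by ring. lra. }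
  assert (Hb' : Rabs b' < r1).
  { pose proof (Rabs_triang (b' - b) b). replace (b' - b + b) with b' in H1 by ring. lra. }
  assert (Hd' : Rabs d' < r1).
  { pose proof (Rabs_triang (d' - d) d). replace (d' - d + d) with d' in H1 by ring. lra. }
  assert (He' : Rabs e' < r1).
  { pose proof (Rabs_triang (e' - e) e). replace (e' - e + e) with e' in H1 by ring. lra. }
  assert (S1 : Rabs (PS c a' b' d' e' - PS c a b' d' e') <= B * Rabs (a' - a)).
  { apply (mvt_bound (fun t => PS c t b' d' e') (fun t => PS (D1 c) t b' d' e')).
    intros t Ht. assert (Rabs t < r1) by (apply (seg_abs a a'); auto; lra).
    split. apply (PS_deriv1 c r); auto; lra.
    apply (PS_bound (Dk 0 c) r1); auto; try lra. apply Bnd_Dk with r; auto; lra. }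
  assert (S2 : Rabs (PS c a b' d' e' - PS c a b d' e') <= B * Rabs (b' - b)).
  { apply (mvt_bound (fun t => PS c a t d' e') (fun t => PS (D2 c) a t d' e')).
    intros t Ht. assert (Rabs t < r1) by (apply (seg_abs b b'); auto; lra).
    split. apply (PS_deriv2 c r); auto; lra.
    apply (PS_bound (Dk 1 c) r1); auto; try lra. apply Bnd_Dk with r; auto; lra. }
  assert (S3 : Rabs (PS c a b d' e' - PS c a b d e') <= B * Rabs (d' - d)).
  { apply (mvt_bound (fun t => PS c a b t e') (fun t => PS (D3 c) a b t e')).
    intros t Ht. assert (Rabs t < r1) by (apply (seg_abs d d'); auto; lra).
    split. apply (PS_deriv3 c r); auto; lra.
    apply (PS_bound (Dk 2 c) r1); auto; try lra. apply Bnd_Dk with r; auto; lra. }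
  assert (S4' : Rabs (PS c a b d e' - PS c a b d e) <= B * Rabs (e' - e)).
  { apply (mvt_bound (fun t => PS c a b d t) (fun t => PS (D4 c) a b d t)).
    intros t Ht. assert (Rabs t < r1) by (apply (seg_abs e e'); auto; lra).
    split. apply (PS_deriv4 c r); auto; lra.
    apply (PS_bound (Dk 3 c) r1); auto; try lra. apply Bnd_Dk with r; auto; lra. }
  replace (PS c a' b' d' e' - PS c a b d e) with
    ((PS c a' b' d' e' - PS c a b' d' e') + (PS c a b' d' e' - PS c a b d' e') +
     ((PS c a b d' e' - PS c a b d e') + (PS c a b d e' - PS c a b d e))) by ring.
  assert (Rabs (a' - a) + Rabs (b' - b) + Rabs (d' - d) + Rabs (e' - e) < 4 * (eps / (4 * B))) by lra.
  assert (B * (Rabs (a' - a) + Rabs (b' - b) + Rabs (d' - d) + Rabs (e' - e)) < eps).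
  { apply Rlt_le_trans with (B * (4 * (eps / (4 * B)))).
    apply Rmult_lt_compat_l; auto. right; field; lra. }
  pose proof (Rabs_triang (PS c a' b' d' e' - PS c a b' d' e' + (PS c a b' d' e' - PS c a b d' e'))
     (PS c a b d' e' - PS c a b d e' + (PS c a b d e' - PS c a b d e))).
  pose proof (Rabs_triang (PS c a' b' d' e' - PS c a b' d' e') (PS c a b' d' e' - PS c a b d' e')).
  pose proof (Rabs_triang (PS c a b d' e' - PS c a b d e') (PS c a b d e' - PS c a b d e)).
  lra.
Qed.

Definition Pd (x0 y0 z0 l0 r : R) : set4 := fun x y z l =>
  Rabs (x - x0) < r /\ Rabs (y - y0) < r /\ Rabs (z - z0) < r /\ Rabs (l - l0) < r.

Definition Fc (c : coef) (x0 y0 z0 l0 : R) : fun4 :=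
  fun x y z l => PS c (x - x0) (y - y0) (z - z0) (l - l0).

Definition is_partial4 (k : nat) (f : fun4) (x y z l v : R) : Prop :=
  match k with
  | O => is_derive (fun t => f t y z l) x v
  | 1%nat => is_derive (fun t => f x t z l) y v
  | 2%nat => is_derive (fun t => f x y t l) z v
  | _ => is_derive (fun t => f x y z t) l v
  end.

Lemma ip4_unique k f x y z l v : is_partial4 k f x y z l v -> partial4 k f x y z l = v.
Proof. destruct k as [|[|[|k]]]; simpl; intros; apply is_derive_unique; auto. Qed.
Lemma ip4_ex k f x y z l v : is_partial4 k f x y z l v -> ex_partial4 k f x y z l.
Proof. destruct k as [|[|[|k]]]; simpl; intros; eexists; eauto. Qed.

Lemma shift_deriv (f : R -> R) x x0 v : is_derive f (x - x0) v -> is_derive (fun t => f (t - x0)) x v.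
Proof.
  intros H.
  assert (Hg : is_derive (fun t => t - x0) x 1).
  { eapply deq. apply (is_derive_minus (fun t => t) (fun _ => x0)); [apply did|apply dconst].
    unfold minus, plus, opp, zero; simpl. ring. }
  eapply deq. apply (is_derive_comp f (fun t => t - x0) x v 1 H Hg).
  unfold scal; simpl. unfold mult; simpl. ring.
Qed.

Lemma Fc_partial c r x0 y0 z0 l0 k x y z l : Bnd c r -> Pd x0 y0 z0 l0 r x y z l ->
  is_partial4 k (Fc c x0 y0 z0 l0) x y z l (Fc (Dk k c) x0 y0 z0 l0 x y z l).
Proof.
  intros Hb (h1 & h2 & h3 & h4). unfold Fc.
  destruct k as [|[|[|k]]]; simpl.
  - apply (shift_deriv (fun a => PS c a (y - y0) (z - z0) (l - l0))). apply (PS_deriv1 c r); auto.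
  - apply (shift_deriv (fun a => PS c (x - x0) a (z - z0) (l - l0))). apply (PS_deriv2 c r); auto.
  - apply (shift_deriv (fun a => PS c (x - x0) (y - y0) a (l - l0))). apply (PS_deriv3 c r); auto.
  - apply (shift_deriv (fun a => PS c (x - x0) (y - y0) (z - z0) a)). apply (PS_deriv4 c r); auto.
Qed.

Lemma Fc_cont c r x0 y0 z0 l0 x y z l : Bnd c r -> Pd x0 y0 z0 l0 r x y z l ->
  continuous_at4 (Fc c x0 y0 z0 l0) x y z l.
Proof.
  intros Hb (h1 & h2 & h3 & h4) eps He.
  destruct (PS_cont c r _ _ _ _ Hb h1 h2 h3 h4 eps He) as [del [Hd K]].
  exists del. split; auto. intros x' y' z' l' k1 k2 k3 k4. unfold Fc. apply K.
  replace (x' - x0 - (x - x0)) with (x' - x) by ring; auto.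
  replace (y' - y0 - (y - y0)) with (y' - y) by ring; auto.
  replace (z' - z0 - (z - z0)) with (z' - z) by ring; auto.
  replace (l' - l0 - (l - l0)) with (l' - l) by ring; auto.
Qed.

Lemma near_in (u u0 r t : R) : Rabs (u - u0) < r -> Rabs (t - u) < r - Rabs (u - u0) -> Rabs (t - u0) < r.
Proof.
  intros H1 H2. pose proof (Rabs_triang (t - u) (u - u0)).
  replace (t - u + (u - u0)) with (t - u0) in H by ring. lra.
Qed.

Lemma locR (x e : R) (P : R -> Prop) : 0 < e -> (forall t, Rabs (t - x) < e -> P t) -> locally x P.
Proof. intros He H. exists (mkposreal e He). intros t Ht. apply H. exact Ht. Qed.

Lemma ip4_ext_Pd x0 y0 z0 l0 r k f g x y z l v : Pd x0 y0 z0 l0 r x y z l ->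
  (forall x y z l, Pd x0 y0 z0 l0 r x y z l -> f x y z l = g x y z l) ->
  is_partial4 k g x y z l v -> is_partial4 k f x y z l v.
Proof.
  intros Hp Hfg Hg. destruct Hp as (h1 & h2 & h3 & h4).
  destruct k as [|[|[|k]]]; simpl in *; eapply is_derive_ext_loc; try apply Hg.
  - apply (locR _ (r - Rabs (x - x0))). lra. intros t Ht. symmetry. apply Hfg.
    repeat split; auto. apply (near_in x); auto.
  - apply (locR _ (r - Rabs (y - y0))). lra. intros t Ht. symmetry. apply Hfg.
    repeat split; auto. apply (near_in y); auto.
  - apply (locR _ (r - Rabs (z - z0))). lra. intros t Ht. symmetry. apply Hfg.
    repeat split; auto. apply (near_in z); auto.
  - apply (locR _ (r - Rabs (l - l0))). lra. intros t Ht. symmetry. apply Hfg.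
    repeat split; auto. apply (near_in l); auto.
Qed.

Lemma cont4_ext_Pd x0 y0 z0 l0 r f g x y z l : Pd x0 y0 z0 l0 r x y z l ->
  (forall x y z l, Pd x0 y0 z0 l0 r x y z l -> f x y z l = g x y z l) ->
  continuous_at4 g x y z l -> continuous_at4 f x y z l.
Proof.
  intros Hp Hfg Hg eps He. destruct (Hg eps He) as [d [Hd K]].
  pose proof Hp as (h1 & h2 & h3 & h4).
  set (m := Rmin (Rmin (r - Rabs (x - x0)) (r - Rabs (y - y0))) (Rmin (r - Rabs (z - z0)) (r - Rabs (l - l0)))).
  assert (Hm : 0 < m) by (unfold m; repeat apply Rmin_pos; lra).
  assert (m1 : m <= r - Rabs (x - x0)) by (unfold m; eapply Rle_trans; apply Rmin_l).
  assert (m2 : m <= r - Rabs (y - y0)) by (unfold m; eapply Rle_trans; [apply Rmin_l|apply Rmin_r]).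
  assert (m3 : m <= r - Rabs (z - z0)) by (unfold m; eapply Rle_trans; [apply Rmin_r|apply Rmin_l]).
  assert (m4 : m <= r - Rabs (l - l0)) by (unfold m; eapply Rle_trans; apply Rmin_r).
  exists (Rmin d m). split. apply Rmin_pos; auto.
  intros x' y' z' l' k1 k2 k3 k4. pose proof (Rmin_l d m). pose proof (Rmin_r d m).
  rewrite !Hfg; auto. apply K; lra.
  repeat split; [apply (near_in x)|apply (near_in y)|apply (near_in z)|apply (near_in l)]; auto; lra.
Qed.

Fixpoint Dds (ds : list nat) (c : coef) : coef :=
  match ds with nil => c | cons k ds' => Dk k (Dds ds' c) end.

Lemma Pd_mono x0 y0 z0 l0 r r' x y z l : r' <= r -> Pd x0 y0 z0 l0 r' x y z l -> Pd x0 y0 z0 l0 r x y z l.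
Proof. intros H (h1 & h2 & h3 & h4). repeat split; lra. Qed.

Lemma iter_Fc (f : fun4) c r x0 y0 z0 l0 : Bnd c r ->
  (forall x y z l, Pd x0 y0 z0 l0 r x y z l -> f x y z l = Fc c x0 y0 z0 l0 x y z l) ->
  forall ds r', 0 < r' < r -> Bnd (Dds ds c) r' /\
    forall x y z l, Pd x0 y0 z0 l0 r' x y z l ->
      iter_partial4 ds f x y z l = Fc (Dds ds c) x0 y0 z0 l0 x y z l.
Proof.
  intros Hb Hf ds. induction ds as [|k ds IH]; intros r' Hr.
  - split. apply (Bnd_mono c r); auto; lra. intros. simpl. apply Hf. apply (Pd_mono _ _ _ _ r r'); auto; lra.
  - destruct (IH ((r' + r) / 2) ltac:(lra)) as [B1 E1]. split.
    + simpl. apply (Bnd_Dk k _ ((r' + r) / 2)); auto; lra.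
    + intros x y z l Hp. simpl. apply ip4_unique.
      assert (Hp' : Pd x0 y0 z0 l0 ((r' + r) / 2) x y z l) by (apply (Pd_mono _ _ _ _ _ r'); auto; lra).
      apply (ip4_ext_Pd x0 y0 z0 l0 ((r' + r) / 2) k _ (Fc (Dds ds c) x0 y0 z0 l0)); auto.
      apply (Fc_partial _ ((r' + r) / 2)); auto.
Qed.

Lemma cube_bs c a b d e N : cube_sum c a b d e N = bs c a b d e (S N) (S N) (S N) (S N).
Proof.
  unfold cube_sum, bs, S4, term. rewrite ssum_sumf. apply ssum_ext; intros i _.
  rewrite ssum_sumf. apply ssum_ext; intros j _. rewrite ssum_sumf. apply ssum_ext; intros k _.
  rewrite ssum_sumf. apply ssum_ext; intros m _. auto.
Qed.

Lemma analytic_smooth (O : set4) f x0 y0 z0 l0 : analytic4 O f -> O x0 y0 z0 l0 ->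
  exists r, 0 < r /\ smooth4 (Pd x0 y0 z0 l0 r) f.
Proof.
  intros Ha Hp. destruct (Ha x0 y0 z0 l0 Hp) as [r0 [Hr0 [c Hc]]].
  set (r := r0 / 2).
  assert (Hb : Bnd c r).
  { destruct (Hc (x0 + r) (y0 + r) (z0 + r) (l0 + r)) as [_ [[B HB] _]];
      try (replace (_ + r - _) with r by ring; rewrite Rabs_pos_eq; unfold r; lra).
    split. unfold r; lra. exists B. intros n.
    assert (E : Rabs (x0 + r - x0) = r /\ Rabs (y0 + r - y0) = r /\ Rabs (z0 + r - z0) = r /\ Rabs (l0 + r - l0) = r).
    { repeat split; (replace (_ + r - _) with r by ring; rewrite Rabs_pos_eq; unfold r; lra). }
    destruct E as (E1 & E2 & E3 & E4). rewrite E1, E2, E3, E4 in HB.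
    eapply Rle_trans. apply (Aseq_mono c r n (S n)); [unfold r; lra|lia].
    specialize (HB n). rewrite cube_bs in HB. exact HB. }
  assert (Hf : forall x y z l, Pd x0 y0 z0 l0 r x y z l -> f x y z l = Fc c x0 y0 z0 l0 x y z l).
  { intros x y z l (h1 & h2 & h3 & h4).
    destruct (Hc x y z l) as [_ [_ Hcv]]; try (unfold r in *; lra).
    unfold Fc, PS. rewrite (is_lim_seq_unique _ (f x y z l)). auto.
    apply is_lim_seq_incr_1. apply is_lim_seq_Reals.
    eapply Un_cv_ext; [|exact Hcv]. intros n. apply cube_bs. }
  exists (r / 2). split. unfold r; lra.
  intros ds x y z l Hp'.
  destruct (iter_Fc f c r x0 y0 z0 l0 Hb Hf ds (3 * r / 4)) as [Bd E]. unfold r; lra.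
  assert (Hp'' : Pd x0 y0 z0 l0 (3 * r / 4) x y z l) by (apply (Pd_mono _ _ _ _ (3 * r / 4) (r / 2)); auto; unfold r; lra).
  split.
  - apply (cont4_ext_Pd x0 y0 z0 l0 (3 * r / 4) _ (Fc (Dds ds c) x0 y0 z0 l0)); auto.
    apply (Fc_cont _ (3 * r / 4)); auto.
  - intros k. apply (ip4_ex k _ _ _ _ _ (Fc (Dk k (Dds ds c)) x0 y0 z0 l0 x y z l)).
    apply (ip4_ext_Pd x0 y0 z0 l0 (3 * r / 4) k _ (Fc (Dds ds c) x0 y0 z0 l0)); auto.
    apply (Fc_partial _ (3 * r / 4)); auto.
Qed.

Definition fm (f g : fun3) : fun3 := fun x y z => f x y z * g x y z.
Definition fp (f g : fun3) : fun3 := fun x y z => f x y z + g x y z.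
Definition fc (c : R) : fun3 := fun _ _ _ => c.

Lemma sm_fm W f g : open3 W -> smooth3 W f -> smooth3 W g -> smooth3 W (fm f g).
Proof. intros; apply smooth_mult; auto. Qed.
Lemma sm_fp W f g : open3 W -> smooth3 W f -> smooth3 W g -> smooth3 W (fp f g).
Proof. intros; apply smooth_plus; auto. Qed.
Lemma sm_fc W c : smooth3 W (fc c).
Proof. exact (smooth_const W c). Qed.

Ltac smtac := repeat first [ assumption | apply sm_fc | apply sm_fm | apply sm_fp ].

Theorem proposition4p1 (Omega : set4) (g h : fun4)
  (HOopen : open4 Omega) (HOconn : connected4 Omega)
  (Hg : analytic4 Omega g) (Hh : analytic4 Omega h)
  (Hg4 : forall x y z l, Omega x y z l -> dl g x y z l <> 0)
  (HG : diffeo4 Omega (fun x _ _ _ => x) (fun _ y _ _ => y) (fun _ _ z _ => z) g)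
  (HS : forall x y z l, Omega x y z l -> S_of g x y z l = 0)
  (HT : forall x y z l, Omega x y z l -> T_of g h x y z l = 0)
  (x0 y0 z0 l0 : R) (Hp0 : Omega x0 y0 z0 l0) :
  exists (W : set3) (a b : Rbar),
    open3 W /\ W x0 y0 z0 /\ Rbar_lt a l0 /\ Rbar_lt l0 b /\
    (forall x y z (l : R), W x y z -> Rbar_lt a l -> Rbar_lt l b -> Omega x y z l) /\
    exists a0 a1 a2 b0 b1 c0 c1 : fun3,
      smooth3 W a0 /\ smooth3 W a1 /\ smooth3 W a2 /\ smooth3 W b0 /\
      smooth3 W b1 /\ smooth3 W c0 /\ smooth3 W c1 /\
      (forall x y z (l : R), W x y z -> Rbar_lt a l -> Rbar_lt l b ->
         c0 x y z + c1 x y z * l <> 0) /\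
      (forall x y z, W x y z -> c1 x y z * b0 x y z - b1 x y z * c0 x y z <> 0) /\
      (forall x y z (l : R) xd zd, W x y z -> Rbar_lt a l -> Rbar_lt l b ->
         (zd = h x y z l + g x y z l * xd <->
          l * (b1 x y z * xd + a2 x y z * l - c1 x y z * zd)
          + (b0 x y z * xd + a1 x y z * l - c0 x y z * zd) + a0 x y z = 0)).
Proof.
  destruct (HOopen _ _ _ _ Hp0) as [e1 [He1 HO1]].
  destruct (analytic_smooth _ _ _ _ _ _ Hh Hp0) as [r [Hr Hsh]].
  destruct HG as (_&_&_&_&Hsg&_).
  set (d := Rmin e1 r).
  assert (Hd : 0 < d) by (apply Rmin_pos; auto).
  assert (Hd1 : d <= e1) by apply Rmin_l. assert (Hd2 : d <= r) by apply Rmin_r.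
  set (W := fun x y z => Rabs (x - x0) < d /\ Rabs (y - y0) < d /\ Rabs (z - z0) < d).
  set (O' := fun x y z l => W x y z /\ l0 - d < l < l0 + d).
  assert (HOW : forall x y z l, O' x y z l -> Omega x y z l).
  { intros x y z l (( h1 & h2 & h3) & h4). apply HO1; auto; try lra.
    apply Rabs_def1; lra. }
  assert (HW : open3 W).
  { intros x y z (h1 & h2 & h3).
    exists (Rmin (Rmin (d - Rabs (x - x0)) (d - Rabs (y - y0))) (d - Rabs (z - z0))).
    split. repeat apply Rmin_pos; lra.
    intros x' y' z' k1 k2 k3.
    pose proof (Rmin_l (Rmin (d - Rabs (x - x0)) (d - Rabs (y - y0))) (d - Rabs (z - z0))).
    pose proof (Rmin_r (Rmin (d - Rabs (x - x0)) (d - Rabs (y - y0))) (d - Rabs (z - z0))).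
    pose proof (Rmin_l (d - Rabs (x - x0)) (d - Rabs (y - y0))).
    pose proof (Rmin_r (d - Rabs (x - x0)) (d - Rabs (y - y0))).
    pose proof (Rabs_triang (x' - x) (x - x0)). pose proof (Rabs_triang (y' - y) (y - y0)).
    pose proof (Rabs_triang (z' - z) (z - z0)).
    replace (x' - x + (x - x0)) with (x' - x0) in * by ring.
    replace (y' - y + (y - y0)) with (y' - y0) in * by ring.
    replace (z' - z + (z - z0)) with (z' - z0) in * by ring.
    split; [|split]; lra. }
  assert (Hsg' : smooth4 O' g) by (apply (smooth4_mono Omega); auto).
  assert (Hsh' : smooth4 O' h).
  { apply (smooth4_mono (Pd x0 y0 z0 l0 r)); auto.
    intros x y z l (( h1 & h2 & h3) & h4). unfold Pd; repeat split; try lra.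
    apply Rabs_def1; lra. }
  assert (HWl : forall x y z, W x y z -> O' x y z l0) by (intros; split; auto; lra).
  set (g0 := fun x y z => iter_partial4 nil g x y z l0).
  set (g1 := fun x y z => iter_partial4 (3%nat :: nil) g x y z l0).
  set (g2 := fun x y z => iter_partial4 (3%nat :: 3%nat :: nil) g x y z l0).
  set (h0 := fun x y z => iter_partial4 nil h x y z l0).
  set (h1 := fun x y z => iter_partial4 (3%nat :: nil) h x y z l0).
  set (h2 := fun x y z => iter_partial4 (3%nat :: 3%nat :: nil) h x y z l0).
  assert (Sg0 : smooth3 W g0) by (apply (smooth_restrict O'); auto).
  assert (Sg1 : smooth3 W g1) by (apply (smooth_restrict O'); auto).
  assert (Sg2 : smooth3 W g2) by (apply (smooth_restrict O'); auto).
  assert (Sh0 : smooth3 W h0) by (apply (smooth_restrict O'); auto).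
  assert (Sh1 : smooth3 W h1) by (apply (smooth_restrict O'); auto).
  assert (Sh2 : smooth3 W h2) by (apply (smooth_restrict O'); auto).
  set (c0 := fp (fm (fc 2) g1) (fm g2 (fc l0))).
  set (c1 := fm (fc (-1)) g2).
  set (b1 := fp (fm (fc 2) (fm g1 g1)) (fm (fc (-1)) (fm g0 g2))).
  set (b0 := fp (fm (fc 2) (fm g1 g0)) (fm (fc (- l0)) b1)).
  set (q0 := fm (fc 2) (fm g1 h0)).
  set (q1 := fp (fm (fc 2) (fm g1 h1)) (fm (fc (-1)) (fm g2 h0))).
  set (q2 := fp (fm g1 h2) (fm (fc (-1)) (fm g2 h1))).
  set (a1 := fp q1 (fm (fc (-2 * l0)) q2)).
  set (a0 := fp q0 (fp (fm (fc (- l0)) q1) (fm (fc (l0 * l0)) q2))).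
  assert (Sb1 : smooth3 W b1) by (unfold b1; smtac).
  assert (Sq1 : smooth3 W q1) by (unfold q1; smtac).
  assert (Sq2 : smooth3 W q2) by (unfold q2; smtac).
  exists W, (Finite (l0 - d)), (Finite (l0 + d)).
  split; [auto|]. split. { unfold W; rewrite !Rminus_eq_0, !Rabs_R0; auto. }
  simpl. split; [lra|]. split; [lra|].
  split. { intros x y z l Hw Ha Hb. apply HOW. split; auto. }
  exists a0, a1, q2, b0, b1, c0, c1.
  split. unfold a0, q0; smtac.
  split. unfold a1; smtac.
  split. auto.
  split. unfold b0; smtac.
  split. auto.
  split. unfold c0; smtac.
  split. unfold c1; smtac.
  assert (KEY : forall x y z, W x y z -> forall t, l0 - d < t < l0 + d ->
    let D := 2 * g1 x y z - g2 x y z * (t - l0) in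
    D <> 0 /\
    g x y z t * D = 2 * g1 x y z * g0 x y z + (2 * g1 x y z ^ 2 - g0 x y z * g2 x y z) * (t - l0) /\
    h x y z t * D = 2 * g1 x y z * h0 x y z + (2 * g1 x y z * h1 x y z - g2 x y z * h0 x y z) * (t - l0)
             + (g1 x y z * h2 x y z - g2 x y z * h1 x y z) * (t - l0) ^ 2).
  { intros x y z Hw t Ht.
    apply (mobius (l0 - d) (l0 + d) l0
      (fun t => g x y z t) (fun t => iter_partial4 (3%nat :: nil) g x y z t)
      (fun t => iter_partial4 (3%nat :: 3%nat :: nil) g x y z t)
      (fun t => iter_partial4 (3%nat :: 3%nat :: 3%nat :: nil) g x y z t)
      (fun t => h x y z t) (fun t => iter_partial4 (3%nat :: nil) h x y z t)
      (fun t => iter_partial4 (3%nat :: 3%nat :: nil) h x y z t)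
      (fun t => iter_partial4 (3%nat :: 3%nat :: 3%nat :: nil) h x y z t)); auto; [lra|].
    intros s Hs. assert (Hin : O' x y z s) by (split; auto).
    refine (conj _ (conj _ (conj _ (conj _ (conj _ (conj _ (conj _ (conj _ _)))))))).
    - apply Derive_correct. exact (proj2 (Hsg' nil x y z s Hin) 3%nat).
    - apply Derive_correct. exact (proj2 (Hsg' (3%nat :: nil) x y z s Hin) 3%nat).
    - apply Derive_correct. exact (proj2 (Hsg' (3%nat :: 3%nat :: nil) x y z s Hin) 3%nat).
    - apply Derive_correct. exact (proj2 (Hsh' nil x y z s Hin) 3%nat).
    - apply Derive_correct. exact (proj2 (Hsh' (3%nat :: nil) x y z s Hin) 3%nat).
    - apply Derive_correct. exact (proj2 (Hsh' (3%nat :: 3%nat :: nil) x y z s Hin) 3%nat).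
    - exact (Hg4 x y z s (HOW _ _ _ _ Hin)).
    - exact (HS x y z s (HOW _ _ _ _ Hin)).
    - exact (HT x y z s (HOW _ _ _ _ Hin)). }
  assert (G1nz : forall x y z, W x y z -> g1 x y z <> 0).
  { intros x y z Hw. exact (Hg4 x y z l0 (HOW _ _ _ _ (HWl _ _ _ Hw))). }
  split.
  { intros x y z l Hw Ha Hb. simpl in Ha, Hb.
    destruct (KEY x y z Hw l (conj Ha Hb)) as [K1 _].
    unfold c0, c1, fp, fm, fc. contradict K1. lra. }
  split.
  { intros x y z Hw. pose proof (G1nz x y z Hw).
    unfold c0, c1, b0, b1, fp, fm, fc.
    intro E. apply H. 
    assert (E' : -4 * (g1 x y z * g1 x y z * g1 x y z) = 0) by (rewrite <- E; ring).
    assert (g1 x y z * g1 x y z * g1 x y z = 0) by lra.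
    destruct (Rmult_integral _ _ H0) as [H1'|H1']; auto.
    destruct (Rmult_integral _ _ H1'); auto. }
  intros x y z l xd zd Hw Ha Hb. simpl in Ha, Hb.
  destruct (KEY x y z Hw l (conj Ha Hb)) as [K1 [K2 K3]].
  unfold a0, a1, q0, q1, q2, b0, b1, c0, c1, fp, fm, fc.
  set (D := 2 * g1 x y z - g2 x y z * (l - l0)) in *.
  split.
  - intros ->. 
    transitivity (- 1 * ((h x y z l * D - (2 * g1 x y z * h0 x y z + (2 * g1 x y z * h1 x y z - g2 x y z * h0 x y z) * (l - l0)
             + (g1 x y z * h2 x y z - g2 x y z * h1 x y z) * (l - l0) ^ 2))
       + xd * (g x y z l * D - (2 * g1 x y z * g0 x y z + (2 * g1 x y z ^ 2 - g0 x y z * g2 x y z) * (l - l0))))).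
    + unfold D. ring.
    + rewrite K2, K3. ring.
  - intros E.
    assert (E2 : D * zd = (h x y z l * D) + xd * (g x y z l * D)).
    { rewrite K2, K3. unfold D in *. lra. }
    apply (Rmult_eq_reg_l D); auto. rewrite E2. ring.
Qed.
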